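(* Let $L=\mathbb Z^3\subset\mathbb R^3$ with $B(x,y)=xGy^T$, $G=\begin{pmatrix}2&-1&0\\-1&2&-1\\0&-1&2\end{pmatrix}$ (the $A_3$ lattice), $Q(x)=\frac12B(x,x)$, and for $\alpha,\beta\in\mathbb Q^3$ put $\theta_{\alpha,\beta}(\tau,z)=\sum_{v\in\mathbb Z^3}e(B(\beta,v))\,e(\tau Q(\alpha+v)+B(\alpha+v,z))$ on $\mathbb H\times\mathbb C^3$. Let $A=\{(0,0,0),(\frac12,0,\frac12)\}$ and $\mathcal B=\{(0,0,0),(0,\frac12,0),(\frac12,0,0),(\frac12,\frac12,0)\}$. Then the five functions $\theta_{\alpha,0}^2$ ($\alpha\in A$), $\theta_{0,\beta}^2$ ($\beta\in\mathcal B$) are $\mathbb C$-linearly independent, and for any $\alpha\in A$, $\beta\in\mathcal B$, $$\theta_{\alpha,\beta}^2+\theta_{0,0}^2=\theta_{\alpha,0}^2+\theta_{0,\beta}^2.$$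
   Context: $e(x)=\exp(2\pi ix)$, $\mathbb H$ the upper half plane; $B$ is extended bilinearly to $\mathbb C^3$. *)

(* Defs.v *)
From Stdlib Require Import Reals ZArith List.
From Coquelicot Require Import Coquelicot.
Open Scope R_scope.

Definition C3 : Type := (C * C * C)%type.

Definition C3add (x y : C3) : C3 :=
  let '(x1, x2, x3) := x in let '(y1, y2, y3) := y in
  (Cplus x1 y1, Cplus x2 y2, Cplus x3 y3).

Definition Gmat (i j : nat) : R :=
  match i, j with
  | 0%nat, 0%nat | 1%nat, 1%nat | 2%nat, 2%nat => 2
  | 0%nat, 1%nat | 1%nat, 0%nat | 1%nat, 2%nat | 2%nat, 1%nat => -1
  | _, _ => 0
  end.

Definition C3nth (x : C3) (i : nat) : C :=
  let '(x1, x2, x3) := x in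
  match i with 0%nat => x1 | 1%nat => x2 | _ => x3 end.

Definition Bform (x y : C3) : C :=
  fold_right Cplus (RtoC 0)
    (map (fun i => fold_right Cplus (RtoC 0)
       (map (fun j => Cmult (Cmult (C3nth x i) (RtoC (Gmat i j))) (C3nth y j))
            (seq 0 3)))
     (seq 0 3)).

Definition Qform (x : C3) : C := Cmult (RtoC (1/2)) (Bform x x).

Definition cexp (w : C) : C :=
  Cmult (RtoC (exp (Re w))) (cos (Im w), sin (Im w)).

Definition ee (x : C) : C := cexp (Cmult (Cmult (RtoC (2 * PI)) Ci) x).

Definition Zvec (a b c : Z) : C3 := (RtoC (IZR a), RtoC (IZR b), RtoC (IZR c)).

Definition theta_term (al be : C3) (tau : C) (z : C3) (v : C3) : C :=
  Cmult (ee (Bform be v))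
        (ee (Cplus (Cmult tau (Qform (C3add al v))) (Bform (C3add al v) z))).

Definition Zrange (N : nat) : list Z :=
  map (fun k => (Z.of_nat k - Z.of_nat N)%Z) (seq 0 (2 * N + 1)).

Definition Csum (l : list C) : C := fold_right Cplus (RtoC 0) l.

Definition theta_partial (al be : C3) (tau : C) (z : C3) (N : nat) : C :=
  Csum (map (fun a => Csum (map (fun b => Csum (map (fun c =>
    theta_term al be tau z (Zvec a b c)) (Zrange N))) (Zrange N))) (Zrange N)).

(* theta_{alpha,beta}(tau,z) = sum over v in Z^3 (absolutely convergent on H x C^3),
   computed as the limit of the cube partial sums, componentwise. *)
Definition theta (al be : C3) (tau : C) (z : C3) : C :=
  (real (Lim_seq (fun N => Re (theta_partial al be tau z N))),
   real (Lim_seq (fun N => Im (theta_partial al be tau z N)))).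

Definition zero3 : C3 := (RtoC 0, RtoC 0, RtoC 0).
Definition half : C := RtoC (1/2).

Definition setA : list C3 := zero3 :: (half, RtoC 0, half) :: nil.
Definition setB : list C3 :=
  zero3 :: (RtoC 0, half, RtoC 0) :: (half, RtoC 0, RtoC 0) :: (half, half, RtoC 0) :: nil.

Definition sq (w : C) : C := Cmult w w.

(* Main.v *)
Require Import Defs.
From Stdlib Require Import Reals ZArith List Lra Lia Permutation.
From Coquelicot Require Import Coquelicot.
Import ListNotations.
Open Scope R_scope.

Definition CS {A} (f : A -> C) (l : list A) : C := Csum (map f l).
Definition RS {A} (f : A -> R) (l : list A) : R := fold_right Rplus 0 (map f l).

Lemma CS_nil {A} (f : A -> C) : CS f [] = RtoC 0.
Proof. reflexivity. Qed.
Lemma CS_cons {A} (f : A -> C) x l : CS f (x :: l) = Cplus (f x) (CS f l).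
Proof. reflexivity. Qed.
Lemma RS_cons {A} (f : A -> R) x l : RS f (x :: l) = f x + RS f l.
Proof. reflexivity. Qed.

Lemma CS_app {A} (f : A -> C) l1 l2 : CS f (l1 ++ l2) = Cplus (CS f l1) (CS f l2).
Proof.
  induction l1 as [|x l IH]; simpl.
  - unfold CS; simpl. rewrite Cplus_0_l. reflexivity.
  - rewrite !CS_cons, IH. ring.
Qed.
Lemma RS_app {A} (f : A -> R) l1 l2 : RS f (l1 ++ l2) = RS f l1 + RS f l2.
Proof.
  induction l1 as [|x l IH]; simpl.
  - unfold RS; simpl. ring.
  - rewrite !RS_cons, IH. ring.
Qed.

Lemma CS_flat_map {A B} (f : B -> C) (g : A -> list B) l :
  CS f (flat_map g l) = CS (fun x => CS f (g x)) l.
Proof.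
  induction l as [|x l IH]; simpl; [reflexivity|].
  rewrite CS_app, IH. reflexivity.
Qed.
Lemma RS_flat_map {A B} (f : B -> R) (g : A -> list B) l :
  RS f (flat_map g l) = RS (fun x => RS f (g x)) l.
Proof.
  induction l as [|x l IH]; simpl; [reflexivity|].
  rewrite RS_app, IH. reflexivity.
Qed.
Lemma CS_map {A B} (f : B -> C) (g : A -> B) l : CS f (map g l) = CS (fun x => f (g x)) l.
Proof. unfold CS. rewrite map_map. reflexivity. Qed.
Lemma RS_map {A B} (f : B -> R) (g : A -> B) l : RS f (map g l) = RS (fun x => f (g x)) l.
Proof. unfold RS. rewrite map_map. reflexivity. Qed.

Lemma CS_ext {A} (f g : A -> C) l : (forall x, In x l -> f x = g x) -> CS f l = CS g l.
Proof.
  induction l as [|x l IH]; intros H; [reflexivity|].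
  rewrite !CS_cons. rewrite (H x (or_introl eq_refl)).
  rewrite IH; [reflexivity|]. intros; apply H; simpl; auto.
Qed.
Lemma RS_ext {A} (f g : A -> R) l : (forall x, In x l -> f x = g x) -> RS f l = RS g l.
Proof.
  induction l as [|x l IH]; intros H; [reflexivity|].
  rewrite !RS_cons. rewrite (H x (or_introl eq_refl)).
  rewrite IH; [reflexivity|]. intros; apply H; simpl; auto.
Qed.
Lemma RS_le {A} (f g : A -> R) l : (forall x, In x l -> f x <= g x) -> RS f l <= RS g l.
Proof.
  induction l as [|x l IH]; intros H; [unfold RS; simpl; lra|].
  rewrite !RS_cons. apply Rplus_le_compat; [apply H; simpl; auto|apply IH; intros; apply H; simpl; auto].
Qed.
Lemma RS_nonneg {A} (f : A -> R) l : (forall x, In x l -> 0 <= f x) -> 0 <= RS f l.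
Proof.
  intros H. replace 0 with (RS (fun _ => 0) l). apply RS_le; auto.
  induction l; [reflexivity|]. rewrite RS_cons, IHl. ring.
  intros; apply H; simpl; auto.
Qed.
Lemma RS_plus {A} (f g : A -> R) l : RS (fun x => f x + g x) l = RS f l + RS g l.
Proof. induction l; [unfold RS; simpl; ring|]. rewrite !RS_cons, IHl. ring. Qed.
Lemma RS_scal {A} (f : A -> R) c l : RS (fun x => c * f x) l = c * RS f l.
Proof. induction l; [unfold RS; simpl; ring|]. rewrite !RS_cons, IHl. ring. Qed.
Lemma CS_plus {A} (f g : A -> C) l : CS (fun x => Cplus (f x) (g x)) l = Cplus (CS f l) (CS g l).
Proof. induction l; [unfold CS; simpl; ring|]. rewrite !CS_cons, IHl. ring. Qed.
Lemma CS_scal {A} (f : A -> C) c l : CS (fun x => Cmult c (f x)) l = Cmult c (CS f l).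
Proof. induction l; [unfold CS; simpl; ring|]. rewrite !CS_cons, IHl. ring. Qed.
Lemma CS_opp {A} (f : A -> C) l : CS (fun x => Copp (f x)) l = Copp (CS f l).
Proof. induction l; [unfold CS; simpl; ring|]. rewrite !CS_cons, IHl. ring. Qed.

Lemma Cmod_CS {A} (f : A -> C) l : Cmod (CS f l) <= RS (fun x => Cmod (f x)) l.
Proof.
  induction l; unfold CS, RS; simpl.
  - rewrite Cmod_0. lra.
  - eapply Rle_trans; [apply Cmod_triangle|]. fold (CS f l). fold (RS (fun x => Cmod (f x)) l). lra.
Qed.

Lemma CS_perm {A} (f : A -> C) l1 l2 : Permutation l1 l2 -> CS f l1 = CS f l2.
Proof.
  induction 1; auto.
  - rewrite !CS_cons, IHPermutation. reflexivity.
  - rewrite !CS_cons. ring.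
  - congruence.
Qed.

Lemma CS_filter {A} (P : A -> bool) (f : A -> C) l :
  CS (fun x => if P x then f x else RtoC 0) l = CS f (filter P l).
Proof.
  induction l; [reflexivity|]. simpl. rewrite CS_cons. destruct (P a).
  - rewrite CS_cons, IHl. reflexivity.
  - rewrite IHl. ring.
Qed.

Definition Zl_dec := list_eq_dec Z.eq_dec.
Definition inb (L : list (list Z)) (l : list Z) : bool :=
  if in_dec Zl_dec l L then true else false.

Lemma CS_sub (F : list Z -> C) L1 L2 : NoDup L1 -> NoDup L2 -> incl L1 L2 ->
  CS (fun l => if inb L1 l then F l else RtoC 0) L2 = CS F L1.
Proof.
  intros N1 N2 I. rewrite CS_filter. apply CS_perm.
  apply NoDup_Permutation; [apply NoDup_filter; auto|auto|].
  intros x. rewrite filter_In. unfold inb. destruct (in_dec Zl_dec x L1); split; intros H.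
  - auto.
  - split; auto.
  - destruct H; discriminate.
  - contradiction.
Qed.

Lemma in_Zrange N x : In x (Zrange N) <-> (- Z.of_nat N <= x <= Z.of_nat N)%Z.
Proof.
  unfold Zrange. rewrite in_map_iff. split.
  - intros [k [<- Hk]]. apply in_seq in Hk. lia.
  - intros H. exists (Z.to_nat (x + Z.of_nat N)). split; [lia|]. apply in_seq. lia.
Qed.

Lemma NoDup_Zrange N : NoDup (Zrange N).
Proof.
  unfold Zrange. apply FinFun.Injective_map_NoDup; [|apply seq_NoDup].
  intros a b H. lia.
Qed.

Lemma Zrange_S N : Permutation (Zrange (S N)) ((- Z.of_nat (S N))%Z :: Z.of_nat (S N) :: Zrange N).
Proof.
  apply NoDup_Permutation; [apply NoDup_Zrange| |].
  - constructor; [|constructor; [|apply NoDup_Zrange]].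
    + intros [H|H]; [lia|]. apply in_Zrange in H. lia.
    + intros H. apply in_Zrange in H. lia.
  - intros x. rewrite in_Zrange. simpl. rewrite in_Zrange. lia.
Qed.

Lemma RS_perm {A} (f : A -> R) l1 l2 : Permutation l1 l2 -> RS f l1 = RS f l2.
Proof.
  induction 1; auto.
  - rewrite !RS_cons, IHPermutation. reflexivity.
  - rewrite !RS_cons. ring.
  - congruence.
Qed.

Lemma RS_Zrange_S f N : RS f (Zrange (S N)) = f (- Z.of_nat (S N))%Z + f (Z.of_nat (S N)) + RS f (Zrange N).
Proof. rewrite (RS_perm _ _ _ (Zrange_S N)). rewrite !RS_cons. ring. Qed.

Lemma RS_Zrange_0 f : RS f (Zrange 0) = f 0%Z.
Proof. unfold RS, Zrange. simpl. ring. Qed.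

Definition w (x : Z) : R := exp (- IZR (Z.abs x)).
Definition Tk (k : nat) : R := 2 * exp (- INR k) / (exp 1 - 1).
Definition S0 : R := 1 + Tk 0.

Lemma exp1_gt1 : 1 < exp 1.
Proof. rewrite <- exp_0 at 1. apply exp_increasing. lra. Qed.

Lemma w_pos x : 0 < w x.
Proof. apply exp_pos. Qed.

Lemma w_nat n : w (Z.of_nat n) = exp (- INR n).
Proof. unfold w. rewrite Z.abs_eq by lia. rewrite <- INR_IZR_INZ. reflexivity. Qed.
Lemma w_negnat n : w (- Z.of_nat n)%Z = exp (- INR n).
Proof. unfold w. rewrite Z.abs_opp, Z.abs_eq by lia. rewrite <- INR_IZR_INZ. reflexivity. Qed.

Definition tailf (k : nat) (x : Z) : R := if Z_lt_dec (Z.of_nat k) (Z.abs x) then w x else 0.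

Lemma tail1_strong k M : RS (tailf k) (Zrange M) <= 2 * (exp (- INR k) - exp (- INR (Nat.max M k))) / (exp 1 - 1).
Proof.
  pose proof exp1_gt1.
  induction M.
  - rewrite RS_Zrange_0. unfold tailf. simpl. destruct (Z_lt_dec _ _); [lia|].
    replace (Nat.max 0 k) with k by lia. unfold Rdiv. replace (exp (- INR k) - exp (- INR k)) with 0 by ring. lra.
  - rewrite RS_Zrange_S. unfold tailf at 1 2.
    destruct (Z_lt_dec (Z.of_nat k) (Z.abs (- Z.of_nat (S M)))); destruct (Z_lt_dec (Z.of_nat k) (Z.abs (Z.of_nat (S M)))); try lia.
    + rewrite w_nat, w_negnat. replace (Nat.max M k) with M in IHM by lia.
      replace (Nat.max (S M) k) with (S M) by lia. rewrite S_INR.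
      replace (- (INR M + 1)) with (- INR M + - (1)) by ring. rewrite exp_plus.
      rewrite exp_Ropp with (x := 1).
      apply Rle_trans with (2 * exp (- INR M) * / exp 1 + 2 * (exp (- INR k) - exp (- INR M)) / (exp 1 - 1)); [lra|].
      assert (0 < exp (- INR M)) by apply exp_pos.
      apply Req_le. field. lra.
    + replace (Nat.max (S M) k) with k by lia. replace (Nat.max M k) with k in IHM by lia. lra.
Qed.

Lemma tail1 k M : RS (tailf k) (Zrange M) <= Tk k.
Proof.
  eapply Rle_trans; [apply tail1_strong|]. unfold Tk. pose proof exp1_gt1.
  pose proof (exp_pos (- INR (Nat.max M k))).
  unfold Rdiv. apply Rmult_le_compat_r. left; apply Rinv_0_lt_compat; lra. lra.
Qed.

Lemma Tk_pos k : 0 < Tk k.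
Proof. unfold Tk. pose proof exp1_gt1. pose proof (exp_pos (- INR k)). apply Rdiv_lt_0_compat; lra. Qed.

Lemma sumw M : RS w (Zrange M) <= S0.
Proof.
  assert (RS w (Zrange M) = 1 + RS (tailf 0) (Zrange M)).
  { induction M.
    - rewrite !RS_Zrange_0. unfold tailf, w. simpl. rewrite Ropp_0, exp_0. ring.
    - rewrite !RS_Zrange_S, IHM. unfold tailf.
      destruct (Z_lt_dec (Z.of_nat 0) (Z.abs (- Z.of_nat (S M)))); [|lia].
      destruct (Z_lt_dec (Z.of_nat 0) (Z.abs (Z.of_nat (S M)))); [|lia]. ring. }
  rewrite H. unfold S0. pose proof (tail1 0 M). lra.
Qed.

Lemma S0_ge1 : 1 <= S0.
Proof. unfold S0. pose proof (Tk_pos 0). lra. Qed.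

Fixpoint cube (n N : nat) : list (list Z) :=
  match n with
  | O => [nil]
  | S n => flat_map (fun x => map (cons x) (cube n N)) (Zrange N)
  end.

Lemma in_cube_S n N x l : In (x :: l) (cube (S n) N) <-> In x (Zrange N) /\ In l (cube n N).
Proof.
  simpl. rewrite in_flat_map. split.
  - intros [y [Hy H]]. apply in_map_iff in H. destruct H as [l' [E Hl']]. injection E; intros; subst; auto.
  - intros [H1 H2]. exists x. split; auto. apply in_map; auto.
Qed.

Lemma cube_length n N l : In l (cube n N) -> length l = n.
Proof.
  revert l; induction n; intros l H.
  - simpl in H. destruct H as [<-|[]]; reflexivity.
  - destruct l as [|x l].
    + simpl in H. apply in_flat_map in H. destruct H as [y [_ H]]. apply in_map_iff in H. destruct H as [? [E _]]; discriminate.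
    + apply in_cube_S in H. simpl. f_equal. apply IHn; tauto.
Qed.

Lemma NoDup_cube n N : NoDup (cube n N).
Proof.
  induction n; simpl.
  - constructor; [auto|constructor].
  - generalize (NoDup_Zrange N). induction 1 as [|x L Hx HL IH]; simpl; [constructor|].
    apply NoDup_app; auto.
    + apply FinFun.Injective_map_NoDup; auto. intros a b E; injection E; auto.
    + intros l H1 H2. apply in_map_iff in H1. destruct H1 as [l1 [<- _]].
      apply in_flat_map in H2. destruct H2 as [y [Hy H2]]. apply in_map_iff in H2.
      destruct H2 as [l2 [E _]]. injection E; intros; subst. contradiction.
Qed.

Lemma cube_mono n N M : (N <= M)%nat -> incl (cube n N) (cube n M).
Proof.
  intros HNM. induction n; intros l H; [exact H|].
  destruct l as [|x l].
  - apply cube_length in H. discriminate.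
  - apply in_cube_S in H. apply in_cube_S. split; [|apply IHn; tauto].
    destruct H as [H _]. apply in_Zrange in H. apply in_Zrange. lia.
Qed.

Lemma RS_cube_S (f : list Z -> R) n M :
  RS f (cube (S n) M) = RS (fun x => RS (fun l => f (x :: l)) (cube n M)) (Zrange M).
Proof. simpl. rewrite RS_flat_map. apply RS_ext. intros. apply RS_map. Qed.
Lemma CS_cube_S (f : list Z -> C) n M :
  CS f (cube (S n) M) = CS (fun x => CS (fun l => f (x :: l)) (cube n M)) (Zrange M).
Proof. simpl. rewrite CS_flat_map. apply CS_ext. intros. apply CS_map. Qed.

Fixpoint W (l : list Z) : R := match l with nil => 1 | x :: l => w x * W l end.

Lemma W_pos l : 0 < W l.
Proof. induction l; simpl; [lra|]. apply Rmult_lt_0_compat; auto. apply w_pos. Qed.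

Lemma sumW n M : RS W (cube n M) <= S0 ^ n.
Proof.
  induction n.
  - unfold RS; simpl. lra.
  - rewrite RS_cube_S. simpl.
    apply Rle_trans with (RS (fun x => w x * S0 ^ n) (Zrange M)).
    + apply RS_le. intros x _. rewrite RS_scal. apply Rmult_le_compat_l; [left; apply w_pos|auto].
    + replace (RS (fun x => w x * S0 ^ n) (Zrange M)) with (S0 ^ n * RS w (Zrange M))
        by (rewrite <- RS_scal; apply RS_ext; intros; ring).
      rewrite Rmult_comm. apply Rmult_le_compat_r; [|apply sumw]. apply pow_le. pose proof S0_ge1; lra.
Qed.

Definition ind (b : bool) : R := if b then 1 else 0.

Lemma tailn n k M :
  RS (fun l => ind (negb (inb (cube n k) l)) * W l) (cube n M) <= INR n * Tk k * S0 ^ n.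
Proof.
  pose proof S0_ge1 as HS.
  induction n.
  - unfold RS; simpl. unfold inb; simpl. destruct (in_dec Zl_dec [] [[]]) as [_|n]; [simpl; lra|].
    exfalso; apply n; simpl; auto.
  - rewrite RS_cube_S.
    apply Rle_trans with (RS (fun x => tailf k x * RS W (cube n M) + w x * RS (fun l => ind (negb (inb (cube n k) l)) * W l) (cube n M)) (Zrange M)).
    + apply RS_le. intros x Hx. rewrite <- RS_scal, <- RS_scal, <- RS_plus. apply RS_le.
      intros l Hl. simpl W.
      assert (0 < w x) by apply w_pos. assert (0 < W l) by apply W_pos.
      unfold tailf, ind, inb.
      destruct (in_dec Zl_dec (x :: l) (cube (S n) k)) as [I|I]; simpl.
      * destruct (Z_lt_dec _ _); destruct (in_dec Zl_dec l (cube n k)); simpl; nra.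
      * destruct (Z_lt_dec _ _) as [Z1|Z1]; destruct (in_dec Zl_dec l (cube n k)) as [I2|I2]; simpl; try nra.
        exfalso. apply I. apply in_cube_S. split; auto. apply in_Zrange. lia.
    + rewrite RS_plus.
      replace (RS (fun x => tailf k x * RS W (cube n M)) (Zrange M)) with (RS (tailf k) (Zrange M) * RS W (cube n M)).
      2:{ rewrite Rmult_comm, <- RS_scal. apply RS_ext; intros; ring. }
      replace (RS (fun x => w x * RS (fun l => ind (negb (inb (cube n k) l)) * W l) (cube n M)) (Zrange M))
        with (RS w (Zrange M) * RS (fun l => ind (negb (inb (cube n k) l)) * W l) (cube n M)).
      2:{ rewrite Rmult_comm, <- RS_scal. apply RS_ext; intros; ring. }
      pose proof (tail1 k M). pose proof (sumW n M). pose proof (sumw M).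
      assert (0 <= RS (tailf k) (Zrange M)).
      { apply RS_nonneg. intros. unfold tailf. destruct (Z_lt_dec _ _); [left; apply w_pos|lra]. }
      assert (0 <= RS w (Zrange M)) by (apply RS_nonneg; intros; left; apply w_pos).
      assert (0 <= RS (fun l => ind (negb (inb (cube n k) l)) * W l) (cube n M)).
      { apply RS_nonneg. intros. pose proof (W_pos x). unfold ind; destruct (negb _); lra. }
      pose proof (Tk_pos k). assert (1 <= S0 ^ n) by (apply pow_R1_Rle; lra).
      rewrite S_INR. simpl pow.
      assert (RS (tailf k) (Zrange M) * RS W (cube n M) <= Tk k * S0 ^ n) by (apply Rmult_le_compat; auto; apply RS_nonneg; intros; left; apply W_pos).
      assert (RS w (Zrange M) * RS (fun l => ind (negb (inb (cube n k) l)) * W l) (cube n M) <= S0 * (INR n * Tk k * S0 ^ n)) by (apply Rmult_le_compat; auto).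
      assert (0 <= INR n) by apply pos_INR.
      assert (Tk k * S0^n <= Tk k * (S0 * S0^n)) by (apply Rmult_le_compat_l; nra).
      replace ((INR n + 1) * Tk k * (S0 * S0 ^ n)) with (Tk k * (S0 * S0^n) + S0 * (INR n * Tk k * S0 ^ n)) by ring.
      lra.
Qed.

Definition Cdiff (a b : C) : C := Cplus a (Copp b).

Lemma split_ind (F : list Z -> C) L l :
  F l = Cplus (if inb L l then F l else RtoC 0) (if inb L l then RtoC 0 else F l).
Proof. destruct (inb L l); ring. Qed.

Lemma cube_cauchy n (F : list Z -> C) D :
  (forall l, length l = n -> Cmod (F l) <= D * W l) -> 0 <= D ->
  forall N M, (N <= M)%nat ->
  Cmod (Cdiff (CS F (cube n M)) (CS F (cube n N))) <= D * (INR n * Tk N * S0 ^ n).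
Proof.
  intros HF HD N M HNM.
  rewrite (CS_ext F _ (cube n M) (fun l _ => split_ind F (cube n N) l)).
  rewrite CS_plus. rewrite CS_sub; [|apply NoDup_cube|apply NoDup_cube|apply cube_mono; auto].
  unfold Cdiff. replace (Cplus (Cplus (CS F (cube n N)) (CS (fun l => if inb (cube n N) l then RtoC 0 else F l) (cube n M))) (Copp (CS F (cube n N))))
    with (CS (fun l => if inb (cube n N) l then RtoC 0 else F l) (cube n M)) by ring.
  eapply Rle_trans; [apply Cmod_CS|].
  eapply Rle_trans; [|apply Rmult_le_compat_l; [exact HD|apply (tailn n N M)]].
  rewrite <- RS_scal. apply RS_le. intros l Hl. unfold ind.
  destruct (inb (cube n N) l); simpl.
  - rewrite Cmod_0. pose proof (W_pos l). nra.
  - rewrite Rmult_1_l. apply HF. eapply cube_length; eauto.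
Qed.

Lemma Tk_lim : forall eps, 0 < eps -> exists N0, forall N, (N0 <= N)%nat -> Tk N < eps.
Proof.
  intros eps He. pose proof exp1_gt1.
  destruct (INR_archimed ((exp 1 - 1) * eps / 2) 1) as [N0 HN0].
  { apply Rlt_gt. apply Rdiv_lt_0_compat; [|lra]. apply Rmult_lt_0_compat; lra. }
  exists N0. intros N HN. unfold Tk.
  assert (HI : INR N0 <= INR N) by (apply le_INR; auto).
  assert (1 + INR N <= exp (INR N)).
  { destruct (Req_dec (INR N) 0) as [E|E]. rewrite E, exp_0. lra.
    left. apply exp_ineq1. pose proof (pos_INR N). lra. }
  rewrite exp_Ropp.
  assert (0 < exp (INR N)) by apply exp_pos.
  apply Rmult_lt_reg_r with ((exp 1 - 1) * exp (INR N) / 2).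
  { apply Rdiv_lt_0_compat; [|lra]. apply Rmult_lt_0_compat; lra. }
  replace (2 * / exp (INR N) / (exp 1 - 1) * ((exp 1 - 1) * exp (INR N) / 2)) with 1 by (field; lra).
  assert (INR N * ((exp 1 - 1) * eps / 2) > 1).
  { assert (INR N0 * ((exp 1 - 1) * eps / 2) <= INR N * ((exp 1 - 1) * eps / 2)).
    { apply Rmult_le_compat_r; auto. left; apply Rdiv_lt_0_compat; [|lra]. apply Rmult_lt_0_compat; lra. }
    lra. }
  assert (INR N * ((exp 1 - 1) * eps / 2) <= exp (INR N) * ((exp 1 - 1) * eps / 2)).
  { apply Rmult_le_compat_r; [|lra]. left; apply Rdiv_lt_0_compat; [|lra]. apply Rmult_lt_0_compat; lra. }
  nra.
Qed.

Lemma im_le_Cmod (c : C) : Rabs (Im c) <= Cmod c.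
Proof.
  destruct c as [a b].
  pose proof (re_le_Cmod (Cmult (0, -1) (a, b))). rewrite Cmod_mult in H.
  replace (Cmod (0, -1)) with 1 in H.
  - simpl in H. simpl. replace (0 * a - -1 * b) with b in H by ring. lra.
  - unfold Cmod. simpl. replace (0 * (0 * 1) + -1 * (-1 * 1)) with 1 by ring. rewrite sqrt_1. reflexivity.
Qed.

Lemma cauchy_lim (u : nat -> R) : ex_lim_seq_cauchy u -> is_lim_seq u (real (Lim_seq u)).
Proof.
  intros H. apply ex_lim_seq_cauchy_corr in H. destruct H as [l Hl].
  rewrite (is_lim_seq_unique _ _ Hl). exact Hl.
Qed.

Lemma cube_conv n (F : list Z -> C) D :
  (forall l, length l = n -> Cmod (F l) <= D * W l) -> 0 <= D ->
  is_lim_seq (fun N => Re (CS F (cube n N))) (real (Lim_seq (fun N => Re (CS F (cube n N))))) /\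
  is_lim_seq (fun N => Im (CS F (cube n N))) (real (Lim_seq (fun N => Im (CS F (cube n N))))).
Proof.
  intros HF HD.
  assert (key : forall eps : posreal, exists N0, forall N M, (N0 <= N)%nat -> (N0 <= M)%nat ->
     Cmod (Cdiff (CS F (cube n M)) (CS F (cube n N))) < eps).
  { intros eps. pose proof S0_ge1.
    assert (0 < (D + 1) * (INR n + 1) * S0 ^ n).
    { apply Rmult_lt_0_compat; [apply Rmult_lt_0_compat|]; try (pose proof (pos_INR n); lra). apply pow_lt; lra. }
    destruct (Tk_lim (eps / ((D + 1) * (INR n + 1) * S0 ^ n))) as [N0 HN0].
    { apply Rdiv_lt_0_compat; auto. apply cond_pos. }
    exists N0. intros N M HN HM.
    assert (Hsym : forall a b, Cmod (Cdiff a b) = Cmod (Cdiff b a)).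
    { intros a b. unfold Cdiff. replace (Cplus b (Copp a)) with (Copp (Cplus a (Copp b))) by ring. symmetry. apply Cmod_opp. }
    assert (forall N M, (N0 <= N)%nat -> (N <= M)%nat -> Cmod (Cdiff (CS F (cube n M)) (CS F (cube n N))) < eps).
    { intros N1 M1 H1 H2. eapply Rle_lt_trans; [apply cube_cauchy; eauto|].
      pose proof (HN0 N1 H1). pose proof (Tk_pos N1). pose proof (pos_INR n).
      assert (1 <= S0^n) by (apply pow_R1_Rle; lra).
      apply Rle_lt_trans with ((D + 1) * (INR n + 1) * S0 ^ n * Tk N1).
      - assert (0 <= INR n * Tk N1 * S0^n) by (apply Rmult_le_pos; [apply Rmult_le_pos|]; lra).
        replace ((D + 1) * (INR n + 1) * S0 ^ n * Tk N1) with ((D+1) * (INR n * Tk N1 * S0^n) + (D+1) * Tk N1 * S0^n) by ring.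
        assert (0 <= (D + 1) * Tk N1 * S0 ^ n) by (apply Rmult_le_pos; [apply Rmult_le_pos|]; lra).
        nra.
      - apply Rmult_lt_reg_r with (/ ((D + 1) * (INR n + 1) * S0 ^ n)). apply Rinv_0_lt_compat; auto.
        replace ((D + 1) * (INR n + 1) * S0 ^ n * Tk N1 * / ((D + 1) * (INR n + 1) * S0 ^ n)) with (Tk N1) by (field; lra).
        exact H3. }
    destruct (Nat.le_ge_cases N M). apply H1; auto. rewrite Hsym. apply H1; auto. }
  split; apply cauchy_lim; intros eps; destruct (key eps) as [N0 HN0]; exists N0; intros N M HN HM;
    eapply Rle_lt_trans; try apply (HN0 M N HM HN); unfold Cdiff.
  - replace (Re (CS F (cube n N)) - Re (CS F (cube n M))) with (Re (Cplus (CS F (cube n N)) (Copp (CS F (cube n M))))) by (unfold Cplus, Copp, Re, Im; simpl; ring).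
    apply re_le_Cmod.
  - replace (Im (CS F (cube n N)) - Im (CS F (cube n M))) with (Im (Cplus (CS F (cube n N)) (Copp (CS F (cube n M))))) by (unfold Cplus, Copp, Re, Im; simpl; ring).
    apply im_le_Cmod.
Qed.

Lemma rearr n (F : list Z -> C) D (psi psii : list Z -> list Z) (c d : nat) :
  (forall l, length l = n -> Cmod (F l) <= D * W l) -> 0 <= D ->
  (forall l, psii (psi l) = l) ->
  (forall l, length l = n -> psi (psii l) = l) ->
  (forall N l, In l (cube n N) -> In (psi l) (cube n (c * N + d))) ->
  (forall N l, In l (cube n N) -> In (psii l) (cube n (c * N + d))) ->
  forall N k, (c * k + d <= N)%nat -> (k <= N)%nat ->
  Cmod (Cdiff (CS (fun l => F (psi l)) (cube n N)) (CS F (cube n N))) <= 2 * (D * (INR n * Tk k * S0 ^ n)).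
Proof.
  intros HF HD H1 H2 H3 H4 N k Hk HkN.
  set (M := (c * N + d + N)%nat).
  set (L := map psi (cube n N)).
  assert (NL : NoDup L).
  { apply FinFun.Injective_map_NoDup; [|apply NoDup_cube].
    intros a b E. rewrite <- (H1 a), <- (H1 b), E. reflexivity. }
  assert (IL : incl L (cube n M)).
  { intros l Hl. apply in_map_iff in Hl. destruct Hl as [l0 [<- Hl0]].
    eapply cube_mono; [|apply H3; eauto]. unfold M; lia. }
  assert (IK : forall l, In l (cube n k) -> In l L).
  { intros l Hl. unfold L. apply in_map_iff. exists (psii l). split.
    - apply H2. eapply cube_length; eauto.
    - eapply cube_mono; [|apply H4; eauto]. lia. }
  assert (E1 : CS (fun l => F (psi l)) (cube n N) = CS (fun l => if inb L l then F l else RtoC 0) (cube n M)).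
  { rewrite CS_sub; auto; [|apply NoDup_cube]. unfold L. rewrite CS_map. reflexivity. }
  assert (E2 : CS F (cube n k) = CS (fun l => if inb (cube n k) l then F l else RtoC 0) (cube n M)).
  { rewrite CS_sub; auto; [apply NoDup_cube|apply NoDup_cube|apply cube_mono; unfold M; lia]. }
  assert (B1 : Cmod (Cdiff (CS (fun l => F (psi l)) (cube n N)) (CS F (cube n k))) <= D * (INR n * Tk k * S0 ^ n)).
  { rewrite E1, E2. unfold Cdiff. rewrite <- CS_opp, <- CS_plus.
    eapply Rle_trans; [apply Cmod_CS|].
    eapply Rle_trans; [|apply Rmult_le_compat_l; [exact HD|apply (tailn n k M)]].
    rewrite <- RS_scal. apply RS_le. intros l Hl. unfold ind.
    pose proof (W_pos l). pose proof (HF l (cube_length _ _ _ Hl)).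
    unfold inb at 2 3. destruct (in_dec Zl_dec l (cube n k)) as [I|I]; simpl.
    - unfold inb. destruct (in_dec Zl_dec l L) as [_|I2]; [|exfalso; auto].
      replace (Cplus (F l) (Copp (F l))) with (RtoC 0) by ring. rewrite Cmod_0. nra.
    - destruct (inb L l).
      + replace (Cplus (F l) (Copp (RtoC 0))) with (F l) by ring. lra.
      + replace (Cplus (RtoC 0) (Copp (RtoC 0))) with (RtoC 0) by ring. rewrite Cmod_0. nra. }
  assert (B2 : Cmod (Cdiff (CS F (cube n N)) (CS F (cube n k))) <= D * (INR n * Tk k * S0 ^ n)).
  { apply cube_cauchy; auto. }
  replace (Cdiff (CS (fun l => F (psi l)) (cube n N)) (CS F (cube n N))) with
    (Cplus (Cdiff (CS (fun l => F (psi l)) (cube n N)) (CS F (cube n k))) (Copp (Cdiff (CS F (cube n N)) (CS F (cube n k)))))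
    by (unfold Cdiff; ring).
  eapply Rle_trans; [apply Cmod_triangle|]. rewrite Cmod_opp. lra.
Qed.

Lemma ee_eq x : ee x = (exp (- (2 * PI * Im x)) * cos (2 * PI * Re x), exp (- (2 * PI * Im x)) * sin (2 * PI * Re x)).
Proof.
  destruct x as [a b]. unfold ee, cexp, Ci, RtoC, Cmult, Re, Im. simpl.
  replace (2 * PI * 0 - 0 * 1) with 0 by ring. replace (2 * PI * 1 + 0 * 0) with (2 * PI) by ring.
  replace (0 * a - 2 * PI * b) with (- (2 * PI * b)) by ring.
  replace (0 * b + 2 * PI * a) with (2 * PI * a) by ring.
  f_equal; ring.
Qed.

Lemma ee_mult x y : Cmult (ee x) (ee y) = ee (Cplus x y).
Proof.
  rewrite !ee_eq. destruct x as [a b]; destruct y as [c d]. unfold Cmult, Cplus, Re, Im; simpl.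
  replace (- (2 * PI * (b + d))) with (- (2 * PI * b) + - (2 * PI * d)) by ring.
  replace (2 * PI * (a + c)) with (2 * PI * a + 2 * PI * c) by ring.
  rewrite exp_plus, cos_plus, sin_plus. f_equal; ring.
Qed.

Lemma Cmod_ee x : Cmod (ee x) = exp (- (2 * PI * Im x)).
Proof.
  rewrite ee_eq. unfold Cmod. simpl.
  set (e := exp _). set (c := cos _). set (s := sin _).
  replace (e * c * (e * c * 1) + e * s * (e * s * 1)) with (e * e * (s * s + c * c)) by ring.
  assert (s * s + c * c = 1) by (unfold s, c; pose proof (sin2_cos2 (2 * PI * Re x)); unfold Rsqr in H; lra).
  rewrite H, Rmult_1_r. rewrite sqrt_square. reflexivity. left; apply exp_pos.
Qed.

Lemma cos_sin_int (k : Z) : cos (2 * PI * IZR k) = 1 /\ sin (2 * PI * IZR k) = 0.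
Proof.
  destruct (Z_le_gt_dec 0 k).
  - rewrite <- (Z2Nat.id k) by lia. rewrite <- INR_IZR_INZ.
    replace (2 * PI * INR (Z.to_nat k)) with (0 + 2 * INR (Z.to_nat k) * PI) by ring.
    rewrite cos_period, sin_period, cos_0, sin_0. auto.
  - replace k with (- Z.of_nat (Z.to_nat (- k)))%Z by lia. rewrite opp_IZR, <- INR_IZR_INZ.
    replace (2 * PI * - INR (Z.to_nat (- k))) with (- (0 + 2 * INR (Z.to_nat (- k)) * PI)) by ring.
    rewrite cos_neg, sin_neg, cos_period, sin_period, cos_0, sin_0. split; [auto|ring].
Qed.

Lemma ee_int (k : Z) : ee (RtoC (IZR k)) = RtoC 1.
Proof.
  rewrite ee_eq. simpl. destruct (cos_sin_int k) as [H1 H2]. rewrite H1, H2.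
  unfold RtoC. replace (- (2 * PI * 0)) with 0 by ring. rewrite exp_0. f_equal; ring.
Qed.

Lemma ee_half : ee (RtoC (1/2)) = RtoC (-1).
Proof.
  rewrite ee_eq. simpl. replace (2 * PI * (1/2)) with PI by field. rewrite cos_PI, sin_PI.
  unfold RtoC. replace (- (2 * PI * 0)) with 0 by ring. rewrite exp_0. f_equal; ring.
Qed.

Lemma ee_halfint (k : Z) : ee (RtoC (IZR k / 2)) = RtoC (if Z.even k then 1 else -1).
Proof.
  destruct (Z.even_spec k) as [H _]. destruct (Z.odd_spec k) as [H' _].
  rewrite <- Z.negb_odd. destruct (Z.odd k) eqn:E; simpl.
  - destruct (H' eq_refl) as [m Hm]. subst k.
    replace (RtoC (IZR (2 * m + 1) / 2)) with (Cplus (RtoC (IZR m)) (RtoC (1/2))).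
    + rewrite <- ee_mult, ee_int, ee_half. unfold RtoC, Cmult; simpl. f_equal; ring.
    + rewrite plus_IZR, mult_IZR. unfold RtoC, Cplus. simpl. f_equal; field.
  - assert (Z.even k = true) by (rewrite <- Z.negb_odd, E; reflexivity).
    destruct (H H0) as [m Hm]. subst k.
    replace (IZR (2 * m) / 2) with (IZR m) by (rewrite mult_IZR; field). apply ee_int.
Qed.

Definition R3 := (R * R * R)%type.
Definition rv (a : R3) : C3 := let '(a1, a2, a3) := a in (RtoC a1, RtoC a2, RtoC a3).
Definition Br (a y : R3) : R :=
  let '(a1, a2, a3) := a in let '(y1, y2, y3) := y in
  a1 * (2 * y1 - y2) + a2 * (- y1 + 2 * y2 - y3) + a3 * (- y2 + 2 * y3).
Definition Qr (a : R3) : R := let '(a1, a2, a3) := a in a1*a1 + a2*a2 + a3*a3 - a1*a2 - a2*a3.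
Definition zre (z : C3) : R3 := let '(z1, z2, z3) := z in (Re z1, Re z2, Re z3).
Definition zim (z : C3) : R3 := let '(z1, z2, z3) := z in (Im z1, Im z2, Im z3).
Definition Zr (a b c : Z) : R3 := (IZR a, IZR b, IZR c).
Definition add3 (a b : R3) : R3 := let '(a1, a2, a3) := a in let '(b1, b2, b3) := b in (a1 + b1, a2 + b2, a3 + b3).

Lemma Bform_rv a z : Bform (rv a) z = (Br a (zre z), Br a (zim z)).
Proof.
  destruct a as [[a1 a2] a3]. destruct z as [[[x1 y1] [x2 y2]] [x3 y3]].
  unfold Bform, rv, Br, zre, zim, Csum, C3nth, Gmat, RtoC, Cplus, Cmult, Re, Im. simpl.
  f_equal; ring.
Qed.

Lemma Bform_rv_rv a b : Bform (rv a) (rv b) = RtoC (Br a b).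
Proof.
  rewrite Bform_rv. destruct b as [[b1 b2] b3]. unfold zre, zim, rv, Br. destruct a as [[a1 a2] a3]. simpl.
  unfold RtoC. f_equal. ring.
Qed.

Lemma Qform_rv a : Qform (rv a) = RtoC (Qr a).
Proof.
  unfold Qform. rewrite Bform_rv_rv. destruct a as [[a1 a2] a3]. unfold Br, Qr, RtoC, Cmult; simpl. f_equal; field.
Qed.

Lemma C3add_rv a b : C3add (rv a) (rv b) = rv (add3 a b).
Proof. destruct a as [[a1 a2] a3]; destruct b as [[b1 b2] b3]. unfold C3add, rv, add3, RtoC, Cplus. simpl. f_equal; f_equal; f_equal; ring. Qed.

Lemma Zvec_rv a b c : Zvec a b c = rv (Zr a b c).
Proof. reflexivity. Qed.

Definition targ (a : R3) (tau : C) (z : C3) : C :=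
  Cplus (Cmult tau (RtoC (Qr a))) (Br a (zre z), Br a (zim z)).

Lemma theta_term_rv a b tau z v1 v2 v3 :
  theta_term (rv a) (rv b) tau z (Zvec v1 v2 v3) =
  Cmult (ee (RtoC (Br b (Zr v1 v2 v3)))) (ee (targ (add3 a (Zr v1 v2 v3)) tau z)).
Proof.
  unfold theta_term. rewrite Zvec_rv, Bform_rv_rv, C3add_rv, Qform_rv, Bform_rv. reflexivity.
Qed.

Lemma Im_targ a tau z : Im (targ a tau z) = Im tau * Qr a + Br a (zim z).
Proof. unfold targ, Cplus, Cmult, RtoC, Im; simpl. ring. Qed.
Lemma Re_targ a tau z : Re (targ a tau z) = Re tau * Qr a + Br a (zre z).
Proof. unfold targ, Cplus, Cmult, RtoC, Re; simpl. ring. Qed.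

Lemma Cmod_theta_term a b tau z v1 v2 v3 :
  Cmod (theta_term (rv a) (rv b) tau z (Zvec v1 v2 v3)) =
  exp (- (2 * PI * (Im tau * Qr (add3 a (Zr v1 v2 v3)) + Br (add3 a (Zr v1 v2 v3)) (zim z)))).
Proof.
  rewrite theta_term_rv, Cmod_mult, !Cmod_ee, Im_targ. simpl Im.
  replace (- (2 * PI * 0)) with 0 by ring. rewrite exp_0. ring.
Qed.

Lemma exp_le_compat x y : x <= y -> exp x <= exp y.
Proof. intros [H|H]; [left; apply exp_increasing; auto|subst; lra]. Qed.

Lemma coord_bound y K X : 0 < y -> 0 <= K ->
  Rabs X - (2 * PI * K + 1) ^ 2 / (2 * PI * y) <= 2 * PI * (y * (X * X) / 4 - K * Rabs X).
Proof.
  intros Hy HK. pose proof PI_RGT_0.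
  assert (E : X * X = Rabs X * Rabs X) by (rewrite <- Rabs_mult; symmetry; apply Rabs_pos_eq; nra).
  rewrite E. set (t := Rabs X).
  assert (0 < 2 * PI * y) by nra.
  assert (2 * PI * (y * (t * t) / 4 - K * t) - (t - (2 * PI * K + 1) ^ 2 / (2 * PI * y)) =
          (PI * y * t - (2 * PI * K + 1)) ^ 2 / (2 * PI * y)) by (field; lra).
  assert (0 <= (PI * y * t - (2 * PI * K + 1)) ^ 2 / (2 * PI * y)).
  { apply Rdiv_le_0_compat; [apply pow2_ge_0|lra]. }
  lra.
Qed.

Lemma Qr_lb X1 X2 X3 : (X1 * X1 + X2 * X2 + X3 * X3) / 4 <= Qr (X1, X2, X3).
Proof.
  unfold Qr.
  assert (0 <= 3/4 * (X1 - 2/3 * X2) ^ 2 + 3/4 * (X3 - 2/3 * X2) ^ 2 + 1/12 * X2 ^ 2).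
  { pose proof (pow2_ge_0 (X1 - 2/3 * X2)). pose proof (pow2_ge_0 (X3 - 2/3 * X2)). pose proof (pow2_ge_0 X2). lra. }
  nra.
Qed.

Lemma mul_lb x c K : Rabs c <= K -> - (K * Rabs x) <= x * c.
Proof.
  intros H. assert (Rabs (x * c) <= K * Rabs x).
  { rewrite Rabs_mult. rewrite Rmult_comm. apply Rmult_le_compat_r; [apply Rabs_pos|auto]. }
  pose proof (Rle_abs (- (x * c))). rewrite Rabs_Ropp in H1. lra.
Qed.

Lemma Br_lb X1 X2 X3 Y1 Y2 Y3 :
  - (2 * (Rabs Y1 + Rabs Y2 + Rabs Y3) * (Rabs X1 + Rabs X2 + Rabs X3)) <= Br (X1, X2, X3) (Y1, Y2, Y3).
Proof.
  unfold Br. set (K := 2 * (Rabs Y1 + Rabs Y2 + Rabs Y3)).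
  pose proof (Rabs_pos Y1). pose proof (Rabs_pos Y2). pose proof (Rabs_pos Y3).
  assert (Rabs (2 * Y1 - Y2) <= K) by (unfold K; unfold Rabs; repeat destruct Rcase_abs; lra).
  assert (Rabs (- Y1 + 2 * Y2 - Y3) <= K) by (unfold K; unfold Rabs; repeat destruct Rcase_abs; lra).
  assert (Rabs (- Y2 + 2 * Y3) <= K) by (unfold K; unfold Rabs; repeat destruct Rcase_abs; lra).
  pose proof (mul_lb X1 _ _ H2). pose proof (mul_lb X2 _ _ H3). pose proof (mul_lb X3 _ _ H4). lra.
Qed.

Lemma w_eq v : w v = exp (- Rabs (IZR v)).
Proof. unfold w. rewrite abs_IZR. reflexivity. Qed.

Definition small (a : R3) : Prop := let '(a1, a2, a3) := a in Rabs a1 <= 1/2 /\ Rabs a2 <= 1/2 /\ Rabs a3 <= 1/2.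

Lemma dom_exp y Y a : 0 < y -> small a ->
  exists D, 0 <= D /\ forall v1 v2 v3,
   exp (- (2 * PI * (y * Qr (add3 a (Zr v1 v2 v3)) + Br (add3 a (Zr v1 v2 v3)) Y))) <= D * (w v1 * (w v2 * (w v3 * 1))).
Proof.
  intros Hy Ha. destruct Y as [[Y1 Y2] Y3]. destruct a as [[a1 a2] a3]. destruct Ha as [H1 [H2 H3]].
  set (K := 2 * (Rabs Y1 + Rabs Y2 + Rabs Y3)).
  assert (HK : 0 <= K) by (unfold K; pose proof (Rabs_pos Y1); pose proof (Rabs_pos Y2); pose proof (Rabs_pos Y3); lra).
  set (c0 := (2 * PI * K + 1) ^ 2 / (2 * PI * y)).
  exists (exp (3 * c0 + 3/2)). split; [left; apply exp_pos|].
  intros v1 v2 v3. rewrite !w_eq. rewrite Rmult_1_r, <- !exp_plus.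
  set (X1 := a1 + IZR v1). set (X2 := a2 + IZR v2). set (X3 := a3 + IZR v3).
  replace (add3 (a1, a2, a3) (Zr v1 v2 v3)) with (X1, X2, X3) by reflexivity.
  apply exp_le_compat.
  pose proof (Qr_lb X1 X2 X3). pose proof (Br_lb X1 X2 X3 Y1 Y2 Y3). fold K in H0.
  pose proof (coord_bound y K X1 Hy HK). pose proof (coord_bound y K X2 Hy HK). pose proof (coord_bound y K X3 Hy HK).
  fold c0 in H4, H5, H6.
  assert (Rabs (IZR v1) <= Rabs X1 + 1/2).
  { replace (IZR v1) with (X1 - a1) by (unfold X1; ring). eapply Rle_trans; [apply Rabs_triang|]. rewrite Rabs_Ropp. lra. }
  assert (Rabs (IZR v2) <= Rabs X2 + 1/2).
  { replace (IZR v2) with (X2 - a2) by (unfold X2; ring). eapply Rle_trans; [apply Rabs_triang|]. rewrite Rabs_Ropp. lra. }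
  assert (Rabs (IZR v3) <= Rabs X3 + 1/2).
  { replace (IZR v3) with (X3 - a3) by (unfold X3; ring). eapply Rle_trans; [apply Rabs_triang|]. rewrite Rabs_Ropp. lra. }
  pose proof PI_RGT_0.
  assert (y * Qr (X1, X2, X3) >= y * ((X1 * X1 + X2 * X2 + X3 * X3) / 4)) by (apply Rle_ge, Rmult_le_compat_l; lra).
  assert (2 * PI * (y * Qr (X1, X2, X3) + Br (X1, X2, X3) (Y1, Y2, Y3)) >=
          2 * PI * (y * (X1 * X1) / 4 - K * Rabs X1) + 2 * PI * (y * (X2 * X2) / 4 - K * Rabs X2) + 2 * PI * (y * (X3 * X3) / 4 - K * Rabs X3)).
  { assert (y * Qr (X1, X2, X3) + Br (X1, X2, X3) (Y1, Y2, Y3) >=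
       (y * (X1 * X1) / 4 - K * Rabs X1) + (y * (X2 * X2) / 4 - K * Rabs X2) + (y * (X3 * X3) / 4 - K * Rabs X3)) by lra.
    nra. }
  lra.
Qed.

Lemma theta_dom a b tau z : 0 < Im tau -> small a ->
  exists D, 0 <= D /\ forall v1 v2 v3,
   Cmod (theta_term (rv a) (rv b) tau z (Zvec v1 v2 v3)) <= D * (w v1 * (w v2 * (w v3 * 1))).
Proof.
  intros Hy Ha. destruct (dom_exp (Im tau) (zim z) a Hy Ha) as [D [HD H]].
  exists D. split; auto. intros. rewrite Cmod_theta_term. apply H.
Qed.

Definition f3 (g : Z -> Z -> Z -> C) (l : list Z) : C :=
  match l with [v1; v2; v3] => g v1 v2 v3 | _ => RtoC 0 end.

Lemma CS_cube3 (g : Z -> Z -> Z -> C) N :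
  CS (f3 g) (cube 3 N) = CS (fun a => CS (fun b => CS (fun c => g a b c) (Zrange N)) (Zrange N)) (Zrange N).
Proof.
  rewrite CS_cube_S. apply CS_ext. intros a _. rewrite CS_cube_S. apply CS_ext. intros b _.
  rewrite CS_cube_S. apply CS_ext. intros c _. simpl. unfold CS; simpl. ring.
Qed.

Definition tf (al be : C3) (tau : C) (z : C3) := f3 (fun a b c => theta_term al be tau z (Zvec a b c)).

Lemma theta_partial_CS al be tau z N : theta_partial al be tau z N = CS (tf al be tau z) (cube 3 N).
Proof. unfold tf. rewrite CS_cube3. reflexivity. Qed.

Lemma tf_dom a b tau z : 0 < Im tau -> small a ->
  exists D, 0 <= D /\ forall l, length l = 3%nat -> Cmod (tf (rv a) (rv b) tau z l) <= D * W l.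
Proof.
  intros Hy Ha. destruct (theta_dom a b tau z Hy Ha) as [D [HD H]]. exists D. split; auto.
  intros l Hl. destruct l as [|v1 [|v2 [|v3 [|]]]]; try discriminate. apply H.
Qed.

Lemma theta_lim a b tau z : 0 < Im tau -> small a ->
  is_lim_seq (fun N => Re (theta_partial (rv a) (rv b) tau z N)) (Re (theta (rv a) (rv b) tau z)) /\
  is_lim_seq (fun N => Im (theta_partial (rv a) (rv b) tau z N)) (Im (theta (rv a) (rv b) tau z)).
Proof.
  intros Hy Ha. destruct (tf_dom a b tau z Hy Ha) as [D [HD H]].
  destruct (cube_conv 3 _ D H HD) as [H1 H2].
  unfold theta. simpl.
  assert (E1 : Lim_seq (fun N => Re (theta_partial (rv a) (rv b) tau z N)) = Lim_seq (fun N => Re (CS (tf (rv a) (rv b) tau z) (cube 3 N))))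
    by (apply Lim_seq_ext; intros; rewrite theta_partial_CS; reflexivity).
  assert (E2 : Lim_seq (fun N => Im (theta_partial (rv a) (rv b) tau z N)) = Lim_seq (fun N => Im (CS (tf (rv a) (rv b) tau z) (cube 3 N))))
    by (apply Lim_seq_ext; intros; rewrite theta_partial_CS; reflexivity).
  rewrite E1, E2. split.
  - eapply is_lim_seq_ext; [|exact H1]. intros; rewrite theta_partial_CS; reflexivity.
  - eapply is_lim_seq_ext; [|exact H2]. intros; rewrite theta_partial_CS; reflexivity.
Qed.

Lemma CS_cube_add (F : list Z -> C) n m N :
  CS F (cube (n + m) N) = CS (fun l1 => CS (fun l2 => F (l1 ++ l2)) (cube m N)) (cube n N).
Proof.
  revert F. induction n; intros F.
  - simpl. unfold CS at 2. simpl. ring_simplify. reflexivity.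
  - change (S n + m)%nat with (S (n + m)). rewrite CS_cube_S, CS_cube_S. apply CS_ext. intros x _. rewrite IHn. reflexivity.
Qed.

Lemma CS_prod (f g : list Z -> C) n m N :
  Cmult (CS f (cube n N)) (CS g (cube m N)) =
  CS (fun l => Cmult (f (firstn n l)) (g (skipn n l))) (cube (n + m) N).
Proof.
  rewrite CS_cube_add. rewrite Cmult_comm, <- CS_scal. apply CS_ext. intros l1 Hl1.
  rewrite Cmult_comm, <- CS_scal. apply CS_ext. intros l2 _.
  apply cube_length in Hl1. rewrite <- Hl1, firstn_app, skipn_app, firstn_all, skipn_all, Nat.sub_diag.
  simpl. rewrite app_nil_r. ring.
Qed.

Lemma W_app l1 l2 : W (l1 ++ l2) = W l1 * W l2.
Proof. induction l1; simpl; [ring|]. rewrite IHl1. ring. Qed.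

Lemma dom_prod (f g : list Z -> C) D1 D2 n m :
  (forall l, length l = n -> Cmod (f l) <= D1 * W l) ->
  (forall l, length l = m -> Cmod (g l) <= D2 * W l) -> 0 <= D1 -> 0 <= D2 ->
  forall l, length l = (n + m)%nat -> Cmod (Cmult (f (firstn n l)) (g (skipn n l))) <= (D1 * D2) * W l.
Proof.
  intros Hf Hg H1 H2 l Hl. rewrite Cmod_mult.
  rewrite <- (firstn_skipn n l) at 3. rewrite W_app.
  assert (length (firstn n l) = n) by (rewrite firstn_length; lia).
  assert (length (skipn n l) = m) by (rewrite skipn_length; lia).
  specialize (Hf _ H). specialize (Hg _ H0).
  replace (D1 * D2 * (W (firstn n l) * W (skipn n l))) with ((D1 * W (firstn n l)) * (D2 * W (skipn n l))) by ring.
  apply Rmult_le_compat; auto; apply Cmod_ge_0.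
Qed.

Definition Clim (u : nat -> C) (x : C) := is_lim_seq (fun n => Re (u n)) (Re x) /\ is_lim_seq (fun n => Im (u n)) (Im x).

Lemma Clim_ext u v x : (forall n, u n = v n) -> Clim u x -> Clim v x.
Proof. intros E [H1 H2]. split; eapply is_lim_seq_ext; eauto; intros; simpl; rewrite E; reflexivity. Qed.

Lemma Clim_plus u v x y : Clim u x -> Clim v y -> Clim (fun n => Cplus (u n) (v n)) (Cplus x y).
Proof. intros [H1 H2] [H3 H4]. split; simpl; [apply is_lim_seq_plus'|apply is_lim_seq_plus']; auto. Qed.

Lemma Clim_opp u x : Clim u x -> Clim (fun n => Copp (u n)) (Copp x).
Proof.
  intros [H1 H2]. split; simpl.
  - apply is_lim_seq_opp in H1. exact H1.
  - apply is_lim_seq_opp in H2. exact H2.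
Qed.

Lemma Clim_mult u v x y : Clim u x -> Clim v y -> Clim (fun n => Cmult (u n) (v n)) (Cmult x y).
Proof.
  intros [H1 H2] [H3 H4]. split; simpl.
  - apply is_lim_seq_minus'; apply is_lim_seq_mult'; auto.
  - apply is_lim_seq_plus'; apply is_lim_seq_mult'; auto.
Qed.

Lemma Clim_unique u x y : Clim u x -> Clim u y -> x = y.
Proof.
  intros [H1 H2] [H3 H4]. apply is_lim_seq_unique in H1, H2, H3, H4.
  destruct x as [x1 x2]; destruct y as [y1 y2]. simpl in *.
  rewrite H1 in H3. rewrite H2 in H4. injection H3; injection H4; intros; subst; reflexivity.
Qed.

Lemma Clim_0 u : (forall eps, 0 < eps -> exists N0, forall N, (N0 <= N)%nat -> Cmod (u N) <= eps) -> Clim u (RtoC 0).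
Proof.
  intros H. split; simpl; apply is_lim_seq_spec; intros eps;
  destruct (H (eps / 2)) as [N0 HN0]; try (pose proof (cond_pos eps); lra);
  exists N0; intros n Hn; specialize (HN0 n Hn); rewrite Rminus_0_r.
  - eapply Rle_lt_trans; [apply re_le_Cmod|]. pose proof (cond_pos eps). lra.
  - eapply Rle_lt_trans; [apply im_le_Cmod|]. pose proof (cond_pos eps). lra.
Qed.

Lemma theta_Clim a b tau z : 0 < Im tau -> small a ->
  Clim (fun N => CS (tf (rv a) (rv b) tau z) (cube 3 N)) (theta (rv a) (rv b) tau z).
Proof.
  intros Hy Ha. destruct (theta_lim a b tau z Hy Ha) as [H1 H2].
  split; (eapply is_lim_seq_ext; [|eassumption]); intros; simpl; rewrite theta_partial_CS; reflexivity.
Qed.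

Lemma in_cube6 N a b c d e f :
  In [a; b; c; d; e; f] (cube 6 N) <->
  (- Z.of_nat N <= a <= Z.of_nat N /\ - Z.of_nat N <= b <= Z.of_nat N /\ - Z.of_nat N <= c <= Z.of_nat N /\
   - Z.of_nat N <= d <= Z.of_nat N /\ - Z.of_nat N <= e <= Z.of_nat N /\ - Z.of_nat N <= f <= Z.of_nat N)%Z.
Proof.
  rewrite !in_cube_S, !in_Zrange. simpl. split; [tauto|]. intros. intuition.
Qed.

Ltac zlia := Z.to_euclidean_division_equations; lia.

Definition Z3 := (Z * Z * Z)%type.
Definition Bi (x y : Z3) : Z :=
  let '(a1, a2, a3) := x in let '(y1, y2, y3) := y in
  (a1 * (2 * y1 - y2) + a2 * (- y1 + 2 * y2 - y3) + a3 * (- y2 + 2 * y3))%Z.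
Definition Qi (x : Z3) : Z := let '(a1, a2, a3) := x in (a1*a1 + a2*a2 + a3*a3 - a1*a2 - a2*a3)%Z.
Definition hz (x : Z3) : R3 := let '(a1, a2, a3) := x in (IZR a1 / 2, IZR a2 / 2, IZR a3 / 2).
Definition sub3 (a b : R3) : R3 := let '(a1, a2, a3) := a in let '(b1, b2, b3) := b in (a1 - b1, a2 - b2, a3 - b3).

Lemma Br_hz b2 v1 v2 v3 : Br (hz b2) (Zr v1 v2 v3) = IZR (Bi b2 (v1, v2, v3)) / 2.
Proof. destruct b2 as [[b1 b2] b3]. unfold Br, hz, Zr, Bi. rewrite !plus_IZR, !mult_IZR, !minus_IZR, !plus_IZR, !opp_IZR, !mult_IZR. field. Qed.

Lemma Qr_Zr a b c : Qr (Zr a b c) = IZR (Qi (a, b, c)).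
Proof. unfold Qr, Zr, Qi. rewrite !minus_IZR, !plus_IZR, !mult_IZR. ring. Qed.

Lemma Br_add x y Y : Br x Y + Br y Y = Br (add3 x y) Y.
Proof. destruct x as [[? ?] ?]; destruct y as [[? ?] ?]; destruct Y as [[? ?] ?]. unfold Br, add3. ring. Qed.

Lemma Qr_par x y : Qr x + Qr y = (Qr (add3 x y) + Qr (sub3 x y)) / 2.
Proof. destruct x as [[? ?] ?]; destruct y as [[? ?] ?]. unfold Qr, add3, sub3. field. Qed.

Lemma targ_sum x y tau z : Cplus (targ x tau z) (targ y tau z) =
  Cplus (Cmult tau (RtoC (Qr x + Qr y))) (Br (add3 x y) (zre z), Br (add3 x y) (zim z)).
Proof.
  unfold targ. rewrite <- !Br_add. destruct tau as [t1 t2]. unfold Cplus, Cmult, RtoC; simpl. f_equal; ring.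
Qed.

Lemma targ_pair x y x' y' tau z : add3 x y = add3 x' y' -> Qr (sub3 x y) = Qr (sub3 x' y') ->
  Cplus (targ x tau z) (targ y tau z) = Cplus (targ x' tau z) (targ y' tau z).
Proof.
  intros H1 H2. rewrite !targ_sum, !(Qr_par x y), !(Qr_par x' y'), H1, H2. reflexivity.
Qed.

Lemma even_mod k : Z.even k = Z.eqb (k mod 2) 0.
Proof.
  destruct (Z.even k) eqn:E; symmetry.
  - apply Z.even_spec in E. destruct E as [m ->]. apply Z.eqb_eq. rewrite Z.mul_comm, Z_mod_mult. reflexivity.
  - apply Z.eqb_neq. intros H. assert (Z.even k = true).
    { apply Z.even_spec. exists (k / 2)%Z. pose proof (Z_div_mod_eq_full k 2). lia. }
    congruence.
Qed.

Definition aA : R3 := (1/2, 0, 1/2).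
Definition r0 : R3 := (0, 0, 0).

Lemma Br_r0 v1 v2 v3 : Br r0 (Zr v1 v2 v3) = 0.
Proof. unfold Br, r0, Zr. ring. Qed.

Lemma small_aA : small aA.
Proof. unfold small, aA. rewrite Rabs_R0, Rabs_right by lra. lra. Qed.
Lemma small_r0 : small r0.
Proof. unfold small, r0. rewrite Rabs_R0. lra. Qed.

Definition psi (b2 : Z3) (M : Z3 -> Z3) (l : list Z) : list Z :=
  match l with
  | [v1; v2; v3; w1; w2; w3] =>
    if Z.eqb ((Bi b2 (v1 + w1, v2 + w2, v3 + w3)%Z) mod 2) 0 then l else
    let '(e1, e2, e3) := M (v1 - w1, v2 - w2, v3 - w3)%Z in
    [((1 + v1 + w1 + e1) / 2)%Z; ((v2 + w2 + e2) / 2)%Z; ((1 + v3 + w3 + e3) / 2)%Z;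
     ((1 + v1 + w1 - e1) / 2)%Z; ((v2 + w2 - e2) / 2)%Z; ((1 + v3 + w3 - e3) / 2)%Z]
  | _ => l
  end.

Definition psii (b2 : Z3) (M : Z3 -> Z3) (l : list Z) : list Z :=
  match l with
  | [p1; p2; p3; q1; q2; q3] =>
    if Z.eqb ((Bi b2 (p1 + q1, p2 + q2, p3 + q3)%Z) mod 2) 0 then l else
    let '(e1, e2, e3) := M (p1 - q1, p2 - q2, p3 - q3)%Z in
    [((p1 + q1 - 1 + e1) / 2)%Z; ((p2 + q2 + e2) / 2)%Z; ((p3 + q3 - 1 + e3) / 2)%Z;
     ((p1 + q1 - 1 - e1) / 2)%Z; ((p2 + q2 - e2) / 2)%Z; ((p3 + q3 - 1 - e3) / 2)%Z]
  | _ => l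
  end.

Definition Mhyps (b2 : Z3) (M : Z3 -> Z3) : Prop :=
  (forall x, M (M x) = x) /\
  (forall x, Qi (M x) = Qi x) /\
  ((Bi b2 (1, 0, 1)) mod 2 = 0)%Z /\
  (forall s1 s2 s3 d1 d2 d3 e1 e2 e3, ((Bi b2 (s1, s2, s3)) mod 2 = 1)%Z ->
     ((d1 + s1) mod 2 = 0)%Z -> ((d2 + s2) mod 2 = 0)%Z -> ((d3 + s3) mod 2 = 0)%Z ->
     M (d1, d2, d3) = (e1, e2, e3) ->
     ((1 + s1 + e1) mod 2 = 0 /\ (s2 + e2) mod 2 = 0 /\ (1 + s3 + e3) mod 2 = 0)%Z) /\
  (forall x1 x2 x3 e1 e2 e3 K, M (x1, x2, x3) = (e1, e2, e3) ->
     (- K <= x1 <= K)%Z -> (- K <= x2 <= K)%Z -> (- K <= x3 <= K)%Z ->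
     (- (3 * K) <= e1 <= 3 * K /\ - (3 * K) <= e2 <= 3 * K /\ - (3 * K) <= e3 <= 3 * K)%Z).

Lemma Bi_add b2 x1 x2 x3 y1 y2 y3 : Bi b2 (x1 + y1, x2 + y2, x3 + y3)%Z = (Bi b2 (x1, x2, x3) + Bi b2 (y1, y2, y3))%Z.
Proof. destruct b2 as [[? ?] ?]. unfold Bi. ring. Qed.

Lemma psii_psi b2 M : Mhyps b2 M -> forall l, psii b2 M (psi b2 M l) = l.
Proof.
  intros [Hinv [Hiso [Hu [Hpar Hb]]]] l.
  destruct l as [|v1 [|v2 [|v3 [|w1 [|w2 [|w3 [|]]]]]]]; try reflexivity.
  unfold psi. destruct (Z.eqb_spec ((Bi b2 (v1 + w1, v2 + w2, v3 + w3)%Z) mod 2) 0) as [E|E].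
  - unfold psii. rewrite E. reflexivity.
  - destruct (M (v1 - w1, v2 - w2, v3 - w3)%Z) as [[e1 e2] e3] eqn:HM.
    assert (O : ((Bi b2 (v1 + w1, v2 + w2, v3 + w3)%Z) mod 2 = 1)%Z) by (pose proof (Z.mod_pos_bound (Bi b2 (v1 + w1, v2 + w2, v3 + w3)%Z) 2); lia).
    destruct (Hpar (v1+w1)%Z (v2+w2)%Z (v3+w3)%Z (v1-w1)%Z (v2-w2)%Z (v3-w3)%Z e1 e2 e3 O ltac:(zlia) ltac:(zlia) ltac:(zlia) HM) as [P1 [P2 P3]].
    unfold psii.
    set (a1 := ((1 + v1 + w1 + e1) / 2)%Z). set (a2 := ((v2 + w2 + e2) / 2)%Z). set (a3 := ((1 + v3 + w3 + e3) / 2)%Z).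
    set (c1 := ((1 + v1 + w1 - e1) / 2)%Z). set (c2 := ((v2 + w2 - e2) / 2)%Z). set (c3 := ((1 + v3 + w3 - e3) / 2)%Z).
    assert (S1 : (a1 + c1 = 1 + v1 + w1)%Z) by (unfold a1, c1; zlia).
    assert (S2 : (a2 + c2 = v2 + w2)%Z) by (unfold a2, c2; zlia).
    assert (S3 : (a3 + c3 = 1 + v3 + w3)%Z) by (unfold a3, c3; zlia).
    assert (D1 : (a1 - c1 = e1)%Z) by (unfold a1, c1; zlia).
    assert (D2 : (a2 - c2 = e2)%Z) by (unfold a2, c2; zlia).
    assert (D3 : (a3 - c3 = e3)%Z) by (unfold a3, c3; zlia).
    assert (C : Z.eqb ((Bi b2 (a1 + c1, a2 + c2, a3 + c3)%Z) mod 2) 0 = false).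
    { rewrite S1, S2, S3. apply Z.eqb_neq.
      replace (Bi b2 (1 + v1 + w1, v2 + w2, 1 + v3 + w3)%Z) with (Bi b2 (1, 0, 1)%Z + Bi b2 (v1 + w1, v2 + w2, v3 + w3)%Z)%Z
        by (destruct b2 as [[? ?] ?]; unfold Bi; ring).
      revert Hu O. generalize (Bi b2 (1, 0, 1)%Z) (Bi b2 (v1 + w1, v2 + w2, v3 + w3)%Z). intros. zlia. }
    rewrite C. rewrite D1, D2, D3, <- HM, Hinv.
    f_equal; [zlia|f_equal; [zlia|f_equal; [zlia|f_equal; [zlia|f_equal; [zlia|f_equal; zlia]]]]].
Qed.

Lemma psi_psii b2 M : Mhyps b2 M -> forall l, length l = 6%nat -> psi b2 M (psii b2 M l) = l.
Proof.
  intros [Hinv [Hiso [Hu [Hpar Hb]]]] l Hl.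
  destruct l as [|p1 [|p2 [|p3 [|q1 [|q2 [|q3 [|]]]]]]]; try discriminate.
  unfold psii. destruct (Z.eqb_spec ((Bi b2 (p1 + q1, p2 + q2, p3 + q3)%Z) mod 2) 0) as [E|E].
  - unfold psi. rewrite E. reflexivity.
  - destruct (M (p1 - q1, p2 - q2, p3 - q3)%Z) as [[e1 e2] e3] eqn:HM.
    assert (O : ((Bi b2 (p1 + q1, p2 + q2, p3 + q3)%Z) mod 2 = 1)%Z) by (pose proof (Z.mod_pos_bound (Bi b2 (p1 + q1, p2 + q2, p3 + q3)%Z) 2); lia).
    destruct (Hpar (p1+q1)%Z (p2+q2)%Z (p3+q3)%Z (p1-q1)%Z (p2-q2)%Z (p3-q3)%Z e1 e2 e3 O ltac:(zlia) ltac:(zlia) ltac:(zlia) HM) as [P1 [P2 P3]].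
    unfold psi.
    set (a1 := ((p1 + q1 - 1 + e1) / 2)%Z). set (a2 := ((p2 + q2 + e2) / 2)%Z). set (a3 := ((p3 + q3 - 1 + e3) / 2)%Z).
    set (c1 := ((p1 + q1 - 1 - e1) / 2)%Z). set (c2 := ((p2 + q2 - e2) / 2)%Z). set (c3 := ((p3 + q3 - 1 - e3) / 2)%Z).
    assert (S1 : (a1 + c1 = p1 + q1 - 1)%Z) by (unfold a1, c1; zlia).
    assert (S2 : (a2 + c2 = p2 + q2)%Z) by (unfold a2, c2; zlia).
    assert (S3 : (a3 + c3 = p3 + q3 - 1)%Z) by (unfold a3, c3; zlia).
    assert (D1 : (a1 - c1 = e1)%Z) by (unfold a1, c1; zlia).
    assert (D2 : (a2 - c2 = e2)%Z) by (unfold a2, c2; zlia).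
    assert (D3 : (a3 - c3 = e3)%Z) by (unfold a3, c3; zlia).
    assert (C : Z.eqb ((Bi b2 (a1 + c1, a2 + c2, a3 + c3)%Z) mod 2) 0 = false).
    { rewrite S1, S2, S3. apply Z.eqb_neq.
      replace (Bi b2 (p1 + q1 - 1, p2 + q2, p3 + q3 - 1)%Z) with (Bi b2 (p1 + q1, p2 + q2, p3 + q3)%Z - Bi b2 (1, 0, 1)%Z)%Z
        by (destruct b2 as [[? ?] ?]; unfold Bi; ring).
      revert Hu O. generalize (Bi b2 (1, 0, 1)%Z) (Bi b2 (p1 + q1, p2 + q2, p3 + q3)%Z). intros. zlia. }
    rewrite C. rewrite D1, D2, D3, <- HM, Hinv.
    f_equal; [zlia|f_equal; [zlia|f_equal; [zlia|f_equal; [zlia|f_equal; [zlia|f_equal; zlia]]]]].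
Qed.

Lemma psi_cube b2 M : Mhyps b2 M -> forall N l, In l (cube 6 N) -> In (psi b2 M l) (cube 6 (4 * N + 1)).
Proof.
  intros [Hinv [Hiso [Hu [Hpar Hb]]]] N l Hl.
  pose proof (cube_length _ _ _ Hl) as Hlen.
  destruct l as [|v1 [|v2 [|v3 [|w1 [|w2 [|w3 [|]]]]]]]; try discriminate.
  apply in_cube6 in Hl. unfold psi.
  destruct (Z.eqb ((Bi b2 (v1 + w1, v2 + w2, v3 + w3)%Z) mod 2) 0).
  - apply in_cube6. lia.
  - destruct (M (v1 - w1, v2 - w2, v3 - w3)%Z) as [[e1 e2] e3] eqn:HM.
    destruct (Hb _ _ _ _ _ _ (2 * Z.of_nat N)%Z HM ltac:(lia) ltac:(lia) ltac:(lia)) as [B1 [B2 B3]].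
    apply in_cube6. rewrite Nat2Z.inj_add, Nat2Z.inj_mul. simpl (Z.of_nat 4). simpl (Z.of_nat 1). zlia.
Qed.

Lemma psii_cube b2 M : Mhyps b2 M -> forall N l, In l (cube 6 N) -> In (psii b2 M l) (cube 6 (4 * N + 1)).
Proof.
  intros [Hinv [Hiso [Hu [Hpar Hb]]]] N l Hl.
  pose proof (cube_length _ _ _ Hl) as Hlen.
  destruct l as [|v1 [|v2 [|v3 [|w1 [|w2 [|w3 [|]]]]]]]; try discriminate.
  apply in_cube6 in Hl. unfold psii.
  destruct (Z.eqb ((Bi b2 (v1 + w1, v2 + w2, v3 + w3)%Z) mod 2) 0).
  - apply in_cube6. lia.
  - destruct (M (v1 - w1, v2 - w2, v3 - w3)%Z) as [[e1 e2] e3] eqn:HM.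
    destruct (Hb _ _ _ _ _ _ (2 * Z.of_nat N)%Z HM ltac:(lia) ltac:(lia) ltac:(lia)) as [B1 [B2 B3]].
    apply in_cube6. rewrite Nat2Z.inj_add, Nat2Z.inj_mul. simpl (Z.of_nat 4). simpl (Z.of_nat 1). zlia.
Qed.

Lemma chi2 b2 v1 v2 v3 w1 w2 w3 :
  Cmult (ee (RtoC (Br (hz b2) (Zr v1 v2 v3)))) (ee (RtoC (Br (hz b2) (Zr w1 w2 w3)))) =
  RtoC (if Z.eqb ((Bi b2 (v1 + w1, v2 + w2, v3 + w3)%Z) mod 2) 0 then 1 else -1).
Proof.
  rewrite ee_mult, !Br_hz.
  replace (Cplus (RtoC (IZR (Bi b2 (v1, v2, v3)) / 2)) (RtoC (IZR (Bi b2 (w1, w2, w3)) / 2)))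
    with (RtoC (IZR (Bi b2 (v1 + w1, v2 + w2, v3 + w3)%Z) / 2)).
  - rewrite ee_halfint, even_mod. reflexivity.
  - rewrite Bi_add, plus_IZR. unfold RtoC, Cplus. simpl. f_equal; field.
Qed.

Lemma ee_r0 v1 v2 v3 : ee (RtoC (Br r0 (Zr v1 v2 v3))) = RtoC 1.
Proof. rewrite Br_r0. apply (ee_int 0). Qed.

Definition H1f (b : R3) tau z (l : list Z) : C :=
  Cplus (Cmult (tf (rv aA) (rv b) tau z (firstn 3 l)) (tf (rv aA) (rv b) tau z (skipn 3 l)))
        (Copp (Cmult (tf (rv aA) (rv r0) tau z (firstn 3 l)) (tf (rv aA) (rv r0) tau z (skipn 3 l)))).
Definition H2f (b : R3) tau z (l : list Z) : C :=
  Cplus (Cmult (tf (rv r0) (rv b) tau z (firstn 3 l)) (tf (rv r0) (rv b) tau z (skipn 3 l)))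
        (Copp (Cmult (tf (rv r0) (rv r0) tau z (firstn 3 l)) (tf (rv r0) (rv r0) tau z (skipn 3 l)))).

Lemma Hf_form a b2 tau z v1 v2 v3 w1 w2 w3 :
  Cplus (Cmult (tf (rv a) (rv (hz b2)) tau z [v1; v2; v3]) (tf (rv a) (rv (hz b2)) tau z [w1; w2; w3]))
        (Copp (Cmult (tf (rv a) (rv r0) tau z [v1; v2; v3]) (tf (rv a) (rv r0) tau z [w1; w2; w3]))) =
  Cmult (Cplus (RtoC (if Z.eqb ((Bi b2 (v1 + w1, v2 + w2, v3 + w3)%Z) mod 2) 0 then 1 else -1)) (RtoC (-1)))
        (ee (Cplus (targ (add3 a (Zr v1 v2 v3)) tau z) (targ (add3 a (Zr w1 w2 w3)) tau z))).
Proof.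
  unfold tf, f3. rewrite !theta_term_rv, !ee_r0, <- ee_mult, <- chi2. ring.
Qed.

Lemma H_point b b2 M tau z : b = hz b2 -> Mhyps b2 M ->
  forall l, length l = 6%nat -> H1f b tau z l = H2f b tau z (psi b2 M l).
Proof.
  intros Hb HM l Hl. subst b.
  destruct HM as [Hinv [Hiso [Hu [Hpar Hbd]]]].
  destruct l as [|v1 [|v2 [|v3 [|w1 [|w2 [|w3 [|]]]]]]]; try discriminate.
  unfold psi.
  destruct (Z.eqb_spec ((Bi b2 (v1 + w1, v2 + w2, v3 + w3)%Z) mod 2) 0) as [E|E].
  - unfold H1f, H2f. simpl firstn. simpl skipn. rewrite !Hf_form.
    assert (E' : Z.eqb ((Bi b2 (v1 + w1, v2 + w2, v3 + w3)%Z) mod 2) 0 = true) by (apply Z.eqb_eq; auto).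
    rewrite E'. unfold RtoC, Cplus, Cmult. simpl. f_equal; ring.
  - destruct (M (v1 - w1, v2 - w2, v3 - w3)%Z) as [[e1 e2] e3] eqn:HMe.
    assert (O : ((Bi b2 (v1 + w1, v2 + w2, v3 + w3)%Z) mod 2 = 1)%Z) by (pose proof (Z.mod_pos_bound (Bi b2 (v1 + w1, v2 + w2, v3 + w3)%Z) 2); lia).
    destruct (Hpar (v1+w1)%Z (v2+w2)%Z (v3+w3)%Z (v1-w1)%Z (v2-w2)%Z (v3-w3)%Z e1 e2 e3 O ltac:(zlia) ltac:(zlia) ltac:(zlia) HMe) as [P1 [P2 P3]].
    set (a1 := ((1 + v1 + w1 + e1) / 2)%Z). set (a2 := ((v2 + w2 + e2) / 2)%Z). set (a3 := ((1 + v3 + w3 + e3) / 2)%Z).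
    set (c1 := ((1 + v1 + w1 - e1) / 2)%Z). set (c2 := ((v2 + w2 - e2) / 2)%Z). set (c3 := ((1 + v3 + w3 - e3) / 2)%Z).
    assert (S1 : (a1 + c1 = 1 + v1 + w1)%Z) by (unfold a1, c1; zlia).
    assert (S2 : (a2 + c2 = v2 + w2)%Z) by (unfold a2, c2; zlia).
    assert (S3 : (a3 + c3 = 1 + v3 + w3)%Z) by (unfold a3, c3; zlia).
    assert (D1 : (a1 - c1 = e1)%Z) by (unfold a1, c1; zlia).
    assert (D2 : (a2 - c2 = e2)%Z) by (unfold a2, c2; zlia).
    assert (D3 : (a3 - c3 = e3)%Z) by (unfold a3, c3; zlia).
    assert (C : Z.eqb ((Bi b2 (a1 + c1, a2 + c2, a3 + c3)%Z) mod 2) 0 = false).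
    { rewrite S1, S2, S3. apply Z.eqb_neq.
      replace (Bi b2 (1 + v1 + w1, v2 + w2, 1 + v3 + w3)%Z) with (Bi b2 (1, 0, 1)%Z + Bi b2 (v1 + w1, v2 + w2, v3 + w3)%Z)%Z
        by (destruct b2 as [[? ?] ?]; unfold Bi; ring).
      revert Hu O. generalize (Bi b2 (1, 0, 1)%Z) (Bi b2 (v1 + w1, v2 + w2, v3 + w3)%Z). intros. zlia. }
    assert (E' : Z.eqb ((Bi b2 (v1 + w1, v2 + w2, v3 + w3)%Z) mod 2) 0 = false) by (apply Z.eqb_neq; auto).
    unfold H1f, H2f. simpl firstn. simpl skipn. rewrite !Hf_form, C, E'.
    f_equal. f_equal. apply targ_pair.
    + unfold add3, aA, r0, Zr.
      assert (IZR a1 + IZR c1 = 1 + IZR v1 + IZR w1) by (rewrite <- plus_IZR, S1, !plus_IZR; ring).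
      assert (IZR a2 + IZR c2 = IZR v2 + IZR w2) by (rewrite <- plus_IZR, S2, !plus_IZR; ring).
      assert (IZR a3 + IZR c3 = 1 + IZR v3 + IZR w3) by (rewrite <- plus_IZR, S3, !plus_IZR; ring).
      f_equal; [f_equal|]; lra.
    + replace (sub3 (add3 aA (Zr v1 v2 v3)) (add3 aA (Zr w1 w2 w3))) with (Zr (v1 - w1) (v2 - w2) (v3 - w3))
        by (unfold sub3, add3, aA, Zr; rewrite !minus_IZR; f_equal; [f_equal|]; ring).
      replace (sub3 (add3 r0 (Zr a1 a2 a3)) (add3 r0 (Zr c1 c2 c3))) with (Zr e1 e2 e3)
        by (unfold sub3, add3, r0, Zr; rewrite <- D1, <- D2, <- D3, !minus_IZR; f_equal; [f_equal|]; ring).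
      rewrite !Qr_Zr, <- HMe, Hiso. reflexivity.
Qed.

Lemma sq_CS (f : list Z -> C) N :
  sq (CS f (cube 3 N)) = CS (fun l => Cmult (f (firstn 3 l)) (f (skipn 3 l))) (cube 6 N).
Proof. unfold sq. apply (CS_prod f f 3 3 N). Qed.

Lemma ident_gen b b2 M tau z : b = hz b2 -> Mhyps b2 M -> 0 < Im tau ->
  Cplus (sq (theta (rv aA) (rv b) tau z)) (sq (theta (rv r0) (rv r0) tau z)) =
  Cplus (sq (theta (rv aA) (rv r0) tau z)) (sq (theta (rv r0) (rv b) tau z)).
Proof.
  intros Hb HM Hy.
  set (S := fun a bb N => CS (tf (rv a) (rv bb) tau z) (cube 3 N)).
  set (X := fun N => Cplus (Cplus (sq (S aA b N)) (sq (S r0 r0 N))) (Copp (Cplus (sq (S aA r0 N)) (sq (S r0 b N))))).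
  assert (L1 : Clim X (Cplus (Cplus (sq (theta (rv aA) (rv b) tau z)) (sq (theta (rv r0) (rv r0) tau z)))
                       (Copp (Cplus (sq (theta (rv aA) (rv r0) tau z)) (sq (theta (rv r0) (rv b) tau z)))))).
  { unfold X, sq. pose proof small_aA. pose proof small_r0.
    apply Clim_plus; [apply Clim_plus|apply Clim_opp; apply Clim_plus]; apply Clim_mult; unfold S; apply theta_Clim; auto. }
  destruct (tf_dom r0 b tau z Hy small_r0) as [D1 [HD1 Hd1]].
  destruct (tf_dom r0 r0 tau z Hy small_r0) as [D2 [HD2 Hd2]].
  set (D := D1 * D1 + D2 * D2).
  assert (HD : 0 <= D) by (unfold D; nra).
  assert (Hdom : forall l, length l = 6%nat -> Cmod (H2f b tau z l) <= D * W l).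
  { intros l Hl. unfold H2f. eapply Rle_trans; [apply Cmod_triangle|]. rewrite Cmod_opp.
    pose proof (dom_prod _ _ _ _ 3 3 Hd1 Hd1 HD1 HD1 l Hl).
    pose proof (dom_prod _ _ _ _ 3 3 Hd2 Hd2 HD2 HD2 l Hl).
    unfold D. lra. }
  assert (EX : forall N, X N = Cdiff (CS (fun l => H2f b tau z (psi b2 M l)) (cube 6 N)) (CS (H2f b tau z) (cube 6 N))).
  { intros N. unfold X, S. rewrite !sq_CS.
    rewrite (CS_ext (fun l => H2f b tau z (psi b2 M l)) (H1f b tau z) (cube 6 N)).
    2:{ intros l Hl. symmetry. apply H_point; auto. eapply cube_length; eauto. }
    unfold H1f, H2f, Cdiff. rewrite !CS_plus, !CS_opp. ring. }
  assert (L2 : Clim X (RtoC 0)).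
  { apply Clim_0. intros eps He.
    assert (0 < 2 * (D + 1) * 6 * S0 ^ 6) by (pose proof S0_ge1; assert (0 < S0^6) by (apply pow_lt; lra); nra).
    destruct (Tk_lim (eps / (2 * (D + 1) * 6 * S0 ^ 6))) as [k0 Hk0]. { apply Rdiv_lt_0_compat; auto. }
    exists (4 * k0 + 1)%nat. intros N HN. rewrite EX.
    set (k := ((N - 1) / 4)%nat).
    assert (Hk1 : (4 * k + 1 <= N)%nat) by (unfold k; pose proof (Nat.mul_div_le (N - 1) 4); lia).
    assert (Hk2 : (k0 <= k)%nat) by (unfold k; apply Nat.div_le_lower_bound; lia).
    eapply Rle_trans.
    - apply (rearr 6 (H2f b tau z) D (psi b2 M) (psii b2 M) 4 1 Hdom HD (psii_psi b2 M HM) (psi_psii b2 M HM)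
               (psi_cube b2 M HM) (psii_cube b2 M HM) N k Hk1); lia.
    - specialize (Hk0 k Hk2). pose proof (Tk_pos k). pose proof S0_ge1. assert (1 <= S0^6) by (apply pow_R1_Rle; lra).
      replace (INR 6) with 6 by (simpl; ring).
      assert (Tk k * (2 * (D + 1) * 6 * S0 ^ 6) < eps).
      { apply Rmult_lt_reg_r with (/ (2 * (D + 1) * 6 * S0 ^ 6)). apply Rinv_0_lt_compat; auto.
        replace (Tk k * (2 * (D + 1) * 6 * S0 ^ 6) * / (2 * (D + 1) * 6 * S0 ^ 6)) with (Tk k) by (field; lra).
        exact Hk0. }
      assert (2 * (D * (6 * Tk k * S0 ^ 6)) <= Tk k * (2 * (D + 1) * 6 * S0 ^ 6)).
      { replace (Tk k * (2 * (D + 1) * 6 * S0 ^ 6)) with (2 * (D * (6 * Tk k * S0 ^ 6)) + 12 * Tk k * S0^6) by ring.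
        assert (0 <= Tk k * S0 ^ 6) by nra. lra. }
      lra. }
  pose proof (Clim_unique _ _ _ L1 L2) as E.
  set (p := sq (theta (rv aA) (rv b) tau z)) in *. set (q := sq (theta (rv r0) (rv r0) tau z)) in *.
  set (r := sq (theta (rv aA) (rv r0) tau z)) in *. set (s := sq (theta (rv r0) (rv b) tau z)) in *.
  replace (Cplus p q) with (Cplus (Cplus (Cplus p q) (Copp (Cplus r s))) (Cplus r s)) by ring.
  rewrite E. ring.
Qed.

Definition M1 (x : Z3) : Z3 := let '(x1, x2, x3) := x in (x3, x2, x1).
Definition M2 (x : Z3) : Z3 := let '(x1, x2, x3) := x in (- x1 + x2, x2, x2 - x3)%Z.
Definition M3 (x : Z3) : Z3 := let '(x1, x2, x3) := x in (- x2 + x3, - x2, x1 - x2)%Z.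

Ltac mhyps_tac :=
  split; [intros [[x1 x2] x3]; simpl; repeat f_equal; ring|];
  split; [intros [[x1 x2] x3]; simpl; ring|];
  split; [reflexivity|];
  split; [intros s1 s2 s3 d1 d2 d3 e1 e2 e3 HB Hd1 Hd2 Hd3 HM; cbv beta iota delta [Bi M1 M2 M3] in HB, HM; injection HM; intros; subst; zlia|];
  intros x1 x2 x3 e1 e2 e3 K HM H1 H2 H3; cbv beta iota delta [M1 M2 M3] in HM; injection HM; intros; subst; lia.

Lemma MH1 : Mhyps (0, 1, 0)%Z M1.
Proof. unfold Mhyps. mhyps_tac. Qed.
Lemma MH2 : Mhyps (1, 0, 0)%Z M2.
Proof. unfold Mhyps. mhyps_tac. Qed.
Lemma MH3 : Mhyps (1, 1, 0)%Z M3.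
Proof. unfold Mhyps. mhyps_tac. Qed.

Lemma part2 : forall al be : C3, In al setA -> In be setB ->
     forall (tau : C) (z : C3), (0 < Im tau)%R ->
       Cplus (sq (theta al be tau z)) (sq (theta zero3 zero3 tau z)) =
       Cplus (sq (theta al zero3 tau z)) (sq (theta zero3 be tau z)).
Proof.
  intros al be Ha Hb tau z Hy.
  simpl in Ha, Hb.
  destruct Ha as [<-|[<-|[]]].
  - apply Cplus_comm.
  - destruct Hb as [<-|[<-|[<-|[<-|[]]]]].
    + reflexivity.
    + apply (ident_gen (0, 1/2, 0) (0, 1, 0)%Z M1 tau z); [unfold hz; f_equal; [f_equal|]; field|apply MH1|exact Hy].
    + apply (ident_gen (1/2, 0, 0) (1, 0, 0)%Z M2 tau z); [unfold hz; f_equal; [f_equal|]; field|apply MH2|exact Hy].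
    + apply (ident_gen (1/2, 1/2, 0) (1, 1, 0)%Z M3 tau z); [unfold hz; repeat f_equal; field|apply MH3|exact Hy].
Qed.

Definition zadd (x y : Z3) : Z3 := let '(a1, a2, a3) := x in let '(b1, b2, b3) := y in (a1 + b1, a2 + b2, a3 + b3)%Z.
Definition xv (al2 : Z3) (v1 v2 v3 : Z) : Z3 := zadd al2 (2 * v1, 2 * v2, 2 * v3)%Z.
Definition Kz (al2 be2 mu : Z3) (v1 v2 v3 : Z) : Z := (2 * Bi be2 (v1, v2, v3) + Bi (xv al2 v1 v2 v3) mu)%Z.
Definition sgZ (al2 be2 mu : Z3) (v1 v2 v3 : Z) : Z := if Z.even (Kz al2 be2 mu v1 v2 v3 / 2) then 1%Z else (-1)%Z.

Lemma Br_hz_hz x y : Br (hz x) (hz y) = IZR (Bi x y) / 4.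
Proof.
  destruct x as [[x1 x2] x3]; destruct y as [[y1 y2] y3]. unfold Br, hz, Bi.
  rewrite !plus_IZR, !mult_IZR, !minus_IZR, !plus_IZR, !opp_IZR, !mult_IZR. field.
Qed.
Lemma Qr_hz x : Qr (hz x) = IZR (Qi x) / 4.
Proof. destruct x as [[x1 x2] x3]. unfold Qr, hz, Qi. rewrite !minus_IZR, !plus_IZR, !mult_IZR. field. Qed.
Lemma add3_hz al2 v1 v2 v3 : add3 (hz al2) (Zr v1 v2 v3) = hz (xv al2 v1 v2 v3).
Proof.
  destruct al2 as [[a1 a2] a3]. unfold add3, hz, Zr, xv, zadd.
  rewrite !plus_IZR, !mult_IZR. f_equal; [f_equal|]; field.
Qed.
Lemma zre_hz mu : zre (rv (hz mu)) = hz mu.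
Proof. destruct mu as [[? ?] ?]. reflexivity. Qed.
Lemma zim_hz mu : zim (rv (hz mu)) = (0, 0, 0).
Proof. destruct mu as [[? ?] ?]. reflexivity. Qed.
Lemma Br_zero x : Br x (0, 0, 0) = 0.
Proof. destruct x as [[? ?] ?]. unfold Br. ring. Qed.

Lemma Kz_even al2 be2 mu v1 v2 v3 : ((Bi al2 mu) mod 2 = 0)%Z -> ((Kz al2 be2 mu v1 v2 v3) mod 2 = 0)%Z.
Proof.
  intros H. unfold Kz.
  replace (Bi (xv al2 v1 v2 v3) mu) with (Bi al2 mu + 2 * Bi (v1, v2, v3) mu)%Z
    by (destruct al2 as [[? ?] ?]; destruct mu as [[? ?] ?]; unfold Bi, xv, zadd; ring).
  revert H. generalize (Bi al2 mu) (Bi be2 (v1, v2, v3)) (Bi (v1, v2, v3) mu). intros. zlia.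
Qed.

Lemma ee_pair x y : ee (x, y) = Cmult (RtoC (exp (- (2 * PI * y)))) (ee (RtoC x)).
Proof.
  rewrite !ee_eq. simpl. replace (- (2 * PI * 0)) with 0 by ring. rewrite exp_0.
  unfold RtoC, Cmult. simpl. f_equal; ring.
Qed.

Lemma term_real al2 be2 mu t v1 v2 v3 : ((Bi al2 mu) mod 2 = 0)%Z ->
  theta_term (rv (hz al2)) (rv (hz be2)) (0, t) (rv (hz mu)) (Zvec v1 v2 v3) =
  RtoC (IZR (sgZ al2 be2 mu v1 v2 v3) * exp (- (2 * PI * (t * (IZR (Qi (xv al2 v1 v2 v3)) / 4))))).
Proof.
  intros H. rewrite theta_term_rv, ee_mult.
  pose proof (Kz_even al2 be2 mu v1 v2 v3 H) as HK.
  set (K := Kz al2 be2 mu v1 v2 v3) in *.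
  replace (Cplus (RtoC (Br (hz be2) (Zr v1 v2 v3))) (targ (add3 (hz al2) (Zr v1 v2 v3)) (0, t) (rv (hz mu))))
    with ((IZR (K / 2) / 2, t * (IZR (Qi (xv al2 v1 v2 v3)) / 4)) : C).
  - rewrite ee_pair, ee_halfint. unfold sgZ. fold K.
    destruct (Z.even (K / 2)); unfold RtoC, Cmult; simpl; f_equal; ring.
  - unfold targ. rewrite add3_hz, zre_hz, zim_hz, Br_zero, Br_hz_hz, Br_hz, Qr_hz.
    unfold RtoC, Cplus, Cmult. simpl. f_equal.
    + assert (E : (K = 2 * (K / 2))%Z) by zlia.
      assert (IZR K = 2 * IZR (K / 2)) by (rewrite E at 1; rewrite mult_IZR; reflexivity).
      assert (IZR K = 2 * IZR (Bi be2 (v1, v2, v3)) + IZR (Bi (xv al2 v1 v2 v3) mu)) by (unfold K, Kz; rewrite plus_IZR, mult_IZR; ring). lra.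
    + ring.
Qed.

Definition gr (al2 be2 mu : Z3) (t : R) (l : list Z) : R :=
  match l with
  | [v1; v2; v3] => IZR (sgZ al2 be2 mu v1 v2 v3) * exp (- (2 * PI * (t * (IZR (Qi (xv al2 v1 v2 v3)) / 4))))
  | _ => 0
  end.

Lemma tf_gr al2 be2 mu t : ((Bi al2 mu) mod 2 = 0)%Z ->
  forall l, tf (rv (hz al2)) (rv (hz be2)) (0, t) (rv (hz mu)) l = RtoC (gr al2 be2 mu t l).
Proof.
  intros H l. destruct l as [|v1 [|v2 [|v3 [|]]]]; try reflexivity.
  unfold tf, f3, gr. apply term_real; auto.
Qed.

Lemma RS_CS {A} (g : A -> R) L : CS (fun l => RtoC (g l)) L = RtoC (RS g L).
Proof.
  induction L; [reflexivity|]. rewrite CS_cons, RS_cons, IHL. unfold RtoC, Cplus. simpl. f_equal; ring.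
Qed.

Lemma RS_sub (g : list Z -> R) L1 L2 : NoDup L1 -> NoDup L2 -> incl L1 L2 ->
  RS (fun l => if inb L1 l then g l else 0) L2 = RS g L1.
Proof.
  intros N1 N2 I. pose proof (CS_sub (fun l => RtoC (g l)) L1 L2 N1 N2 I).
  rewrite RS_CS in H. rewrite <- (CS_ext (fun l => RtoC (if inb L1 l then g l else 0))) in H.
  - rewrite RS_CS in H. injection H; auto.
  - intros; destruct (inb L1 x); reflexivity.
Qed.

Lemma lim_bound (u : nat -> R) (l p B : R) N0 : is_lim_seq u l -> (forall N, (N0 <= N)%nat -> Rabs (u N - p) <= B) -> Rabs (l - p) <= B.
Proof.
  intros Hl HB. destruct (Rle_dec (Rabs (l - p)) B) as [|Hn]; auto. exfalso.
  apply Rnot_le_lt in Hn.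
  apply is_lim_seq_spec in Hl. unfold is_lim_seq' in Hl. destruct (Hl (mkposreal _ (Rlt_Rminus _ _ Hn))) as [N1 HN1].
  simpl in HN1. specialize (HN1 (Nat.max N0 N1) ltac:(lia)). specialize (HB (Nat.max N0 N1) ltac:(lia)).
  pose proof (Rabs_triang (l - u (Nat.max N0 N1)) (u (Nat.max N0 N1) - p)).
  replace (l - u (Nat.max N0 N1) + (u (Nat.max N0 N1) - p)) with (l - p) in H by ring.
  rewrite Rabs_minus_sym in HN1. lra.
Qed.

Lemma Re_RtoC x : Re (RtoC x) = x.
Proof. reflexivity. Qed.

Definition thetaR (al2 be2 mu : Z3) (t : R) : C := theta (rv (hz al2)) (rv (hz be2)) (0, t) (rv (hz mu)).

Lemma asym al2 be2 mu (E : list (list Z)) (T : Z) :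
  ((Bi al2 mu) mod 2 = 0)%Z -> small (hz al2) -> NoDup E -> incl E (cube 3 2) ->
  (forall v1 v2 v3, (Qi (xv al2 v1 v2 v3) < T)%Z -> In [v1; v2; v3] E) ->
  exists C, 0 <= C /\ forall t, 1 <= t ->
    Im (thetaR al2 be2 mu t) = 0 /\
    Rabs (Re (thetaR al2 be2 mu t) - RS (gr al2 be2 mu t) E) <= C * exp (- (2 * PI * (t * (IZR T / 4)))).
Proof.
  intros Hev Hs HN HI HE.
  destruct (dom_exp 1 (0, 0, 0) (hz al2) ltac:(lra) Hs) as [D [HD Hdom]].
  exists (exp (2 * PI * (IZR T / 4)) * D * S0 ^ 3). split.
  { pose proof (exp_pos (2 * PI * (IZR T / 4))). pose proof S0_ge1. apply Rmult_le_pos; [nra|]. apply pow_le; lra. }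
  intros t Ht.
  assert (Hy : 0 < Im ((0, t) : C)) by (simpl; lra).
  destruct (theta_lim (hz al2) (hz be2) (0, t) (rv (hz mu)) Hy Hs) as [L1 L2].
  assert (ES : forall N, theta_partial (rv (hz al2)) (rv (hz be2)) (0, t) (rv (hz mu)) N = RtoC (RS (gr al2 be2 mu t) (cube 3 N))).
  { intros N. rewrite theta_partial_CS, <- RS_CS. apply CS_ext. intros. apply tf_gr; auto. }
  split.
  - unfold thetaR. assert (Rabs (Im (theta (rv (hz al2)) (rv (hz be2)) (0, t) (rv (hz mu))) - 0) <= 0).
    { apply (lim_bound _ _ _ _ 0 L2). intros N _. rewrite ES. simpl. rewrite Rminus_0_r, Rabs_R0. lra. }
    pose proof (Rabs_pos (Im (theta (rv (hz al2)) (rv (hz be2)) (0, t) (rv (hz mu))) - 0)).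
    assert (Rabs (Im (theta (rv (hz al2)) (rv (hz be2)) (0, t) (rv (hz mu))) - 0) = 0) by lra.
    apply Rabs_eq_0 in H1. lra.
  - unfold thetaR. apply (lim_bound _ _ _ _ 2 L1). intros N HN2. rewrite ES. rewrite (Re_RtoC (RS (gr al2 be2 mu t) (cube 3 N))).
    rewrite <- (RS_sub (gr al2 be2 mu t) E (cube 3 N)); auto; [|apply NoDup_cube|intros l Hl; eapply cube_mono; [exact HN2|auto]].
    assert (Hsplit : RS (gr al2 be2 mu t) (cube 3 N) = RS (fun l => if inb E l then gr al2 be2 mu t l else 0) (cube 3 N) +
                     RS (fun l => if inb E l then 0 else gr al2 be2 mu t l) (cube 3 N)).
    { rewrite <- RS_plus. apply RS_ext. intros. destruct (inb E x); ring. }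
    rewrite Hsplit. replace (RS (fun l => if inb E l then gr al2 be2 mu t l else 0) (cube 3 N) + RS (fun l => if inb E l then 0 else gr al2 be2 mu t l) (cube 3 N) -
      RS (fun l => if inb E l then gr al2 be2 mu t l else 0) (cube 3 N)) with (RS (fun l => if inb E l then 0 else gr al2 be2 mu t l) (cube 3 N)) by ring.
    set (q := exp (- (2 * PI * (t * (IZR T / 4))))).
    assert (Hq : 0 < q) by apply exp_pos.
    apply Rle_trans with (RS (fun l => q * exp (2 * PI * (IZR T / 4)) * (D * W l)) (cube 3 N)).
    + assert (Gen : forall L, (forall l, In l L -> length l = 3%nat) ->
        Rabs (RS (fun l => if inb E l then 0 else gr al2 be2 mu t l) L) <= RS (fun l => q * exp (2 * PI * (IZR T / 4)) * (D * W l)) L).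
      { induction L as [|l L IH]; intros HL.
        - unfold RS; simpl. rewrite Rabs_R0. lra.
        - rewrite !RS_cons. eapply Rle_trans; [apply Rabs_triang|]. apply Rplus_le_compat; [|apply IH; intros; apply HL; simpl; auto].
          assert (Hl : length l = 3%nat) by (apply HL; simpl; auto).
          destruct l as [|v1 [|v2 [|v3 [|]]]]; try discriminate.
          unfold inb. destruct (in_dec Zl_dec [v1; v2; v3] E) as [I|I].
          + rewrite Rabs_R0. pose proof (W_pos [v1; v2; v3]). pose proof (exp_pos (2 * PI * (IZR T / 4))). 
            apply Rmult_le_pos; [nra|]. apply Rmult_le_pos; lra.
          + assert (HT : (T <= Qi (xv al2 v1 v2 v3))%Z) by (destruct (Z_lt_le_dec (Qi (xv al2 v1 v2 v3)) T) as [LL|LL]; [exfalso; apply I; apply HE; auto|auto]).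
            apply IZR_le in HT.
            specialize (Hdom v1 v2 v3). rewrite add3_hz, Qr_hz, Br_zero in Hdom. simpl W.
            unfold gr. rewrite Rabs_mult.
            assert (Rabs (IZR (sgZ al2 be2 mu v1 v2 v3)) = 1) by (unfold sgZ; destruct (Z.even _); [apply Rabs_R1|rewrite Rabs_left by lra; lra]).
            rewrite H, Rmult_1_l, Rabs_pos_eq by (left; apply exp_pos).
            unfold q. rewrite <- exp_plus.
            apply Rle_trans with (exp (2 * PI * (IZR T / 4) + - (2 * PI * (t * (IZR T / 4)))) * exp (- (2 * PI * (1 * (IZR (Qi (xv al2 v1 v2 v3)) / 4) + 0)))).
            * rewrite <- exp_plus. apply exp_le_compat. pose proof PI_RGT_0.
              assert (0 <= (t - 1) * (IZR (Qi (xv al2 v1 v2 v3)) - IZR T)) by (apply Rmult_le_pos; lra). nra.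
            * rewrite Rplus_comm. apply Rmult_le_compat_l; [left; apply exp_pos|]. lra. }
      apply Gen. intros; eapply cube_length; eauto.
    + rewrite RS_scal, RS_scal. pose proof (sumW 3 N).
      unfold q.
      replace (exp (2 * PI * (IZR T / 4)) * D * S0 ^ 3 * exp (- (2 * PI * (t * (IZR T / 4))))) with
        (exp (- (2 * PI * (t * (IZR T / 4)))) * exp (2 * PI * (IZR T / 4)) * (D * S0 ^ 3)) by ring.
      apply Rmult_le_compat_l. { pose proof (exp_pos (- (2 * PI * (t * (IZR T / 4))))). pose proof (exp_pos (2 * PI * (IZR T / 4))). nra. }
      apply Rmult_le_compat_l; auto.
Qed.

Definition E0 : list (list Z) :=
  [[0;0;0]; [1;0;0]; [-1;0;0]; [0;1;0]; [0;-1;0]; [0;0;1]; [0;0;-1];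
   [1;1;0]; [-1;-1;0]; [0;1;1]; [0;-1;-1]; [1;1;1]; [-1;-1;-1]]%Z.
Definition EA : list (list Z) :=
  [[-1;-1;-1]; [-1;0;-1]; [-1;0;0]; [0;0;-1]; [0;0;0]; [0;1;0]]%Z.

Fixpoint nodupb (L : list (list Z)) : bool :=
  match L with [] => true | x :: L => negb (inb L x) && nodupb L end.

Lemma nodupb_ok L : nodupb L = true -> NoDup L.
Proof.
  induction L as [|x L IH]; simpl; intros H; [constructor|].
  apply andb_prop in H. destruct H as [H1 H2]. constructor; auto.
  unfold inb in H1. destruct (in_dec Zl_dec x L); simpl in H1; [discriminate|auto].
Qed.

Lemma inclb_ok (L1 L2 : list (list Z)) : forallb (inb L2) L1 = true -> incl L1 L2.
Proof.
  intros H l Hl. rewrite forallb_forall in H. specialize (H l Hl). unfold inb in H.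
  destruct (in_dec Zl_dec l L2); [auto|discriminate].
Qed.

Definition checkE (al2 : Z3) (T : Z) (E : list (list Z)) : bool :=
  forallb (fun l => match l with [v1; v2; v3] => implb (Z.ltb (Qi (xv al2 v1 v2 v3)) T) (inb E l) | _ => true end) (cube 3 3).

Lemma checkE_ok al2 T E : checkE al2 T E = true ->
  forall v1 v2 v3, (-3 <= v1 <= 3)%Z -> (-3 <= v2 <= 3)%Z -> (-3 <= v3 <= 3)%Z ->
  (Qi (xv al2 v1 v2 v3) < T)%Z -> In [v1; v2; v3] E.
Proof.
  intros H v1 v2 v3 H1 H2 H3 HQ. unfold checkE in H. rewrite forallb_forall in H.
  assert (In [v1; v2; v3] (cube 3 3)).
  { apply in_cube_S. split; [apply in_Zrange; simpl; lia|].
    apply in_cube_S. split; [apply in_Zrange; simpl; lia|].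
    apply in_cube_S. split; [apply in_Zrange; simpl; lia|]. simpl; auto. }
  specialize (H _ H0). change (implb (Z.ltb (Qi (xv al2 v1 v2 v3)) T) (inb E [v1;v2;v3]) = true) in H.
  apply Z.ltb_lt in HQ. rewrite HQ in H. simpl in H.
  unfold inb in H. destruct (in_dec Zl_dec [v1; v2; v3] E); [auto|discriminate].
Qed.

Lemma sq_lt x k : (0 <= k)%Z -> (x * x < k * k)%Z -> (- k < x < k)%Z.
Proof.
  intros Hk H. split.
  - destruct (Z_lt_le_dec (- k) x) as [|L]; auto. exfalso.
    assert (k * k <= x * x)%Z by (replace (x * x)%Z with ((- x) * (- x))%Z by ring; apply Z.mul_le_mono_nonneg; lia). lia.
  - destruct (Z_lt_le_dec x k) as [|L]; auto. exfalso.
    assert (k * k <= x * x)%Z by (apply Z.mul_le_mono_nonneg; lia). lia.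
Qed.

Lemma Qi_bound al2 v1 v2 v3 : (-1 <= fst (fst al2) <= 1)%Z -> (-1 <= snd (fst al2) <= 1)%Z -> (-1 <= snd al2 <= 1)%Z ->
  (Qi (xv al2 v1 v2 v3) < 9)%Z -> (-3 <= v1 <= 3)%Z /\ (-3 <= v2 <= 3)%Z /\ (-3 <= v3 <= 3)%Z.
Proof.
  destruct al2 as [[a1 a2] a3]. cbn [fst snd]. intros H1 H2 H3 HQ. cbv beta iota delta [Qi xv zadd] in HQ.
  set (x1 := (a1 + 2 * v1)%Z) in *. set (x2 := (a2 + 2 * v2)%Z) in *. set (x3 := (a3 + 2 * v3)%Z) in *.
  assert (E : (2 * (x1 * x1 + x2 * x2 + x3 * x3 - x1 * x2 - x2 * x3) = x1 * x1 + (x1 - x2) * (x1 - x2) + (x2 - x3) * (x2 - x3) + x3 * x3)%Z) by ring.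
  pose proof (Z.square_nonneg (x1 - x2)). pose proof (Z.square_nonneg (x2 - x3)).
  pose proof (Z.square_nonneg x1). pose proof (Z.square_nonneg x3). pose proof (Z.square_nonneg (2 * x1 - x2)).
  assert (E2 : (2 * (x1 * x1) + 2 * ((x1 - x2) * (x1 - x2)) - x2 * x2 = (2 * x1 - x2) * (2 * x1 - x2))%Z) by ring.
  assert (B1 : (x1 * x1 < 6 * 6)%Z) by lia. assert (B3 : (x3 * x3 < 6 * 6)%Z) by lia.
  assert (B2 : (x2 * x2 < 7 * 7)%Z) by lia.
  apply sq_lt in B1; [|lia]. apply sq_lt in B2; [|lia]. apply sq_lt in B3; [|lia].
  unfold x1, x2, x3 in *. lia.
Qed.

Definition cnt (al2 be2 mu : Z3) (E : list (list Z)) (n : Z) : Z :=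
  fold_right (fun l acc => match l with [v1; v2; v3] => if Z.eqb (Qi (xv al2 v1 v2 v3)) n then (sgZ al2 be2 mu v1 v2 v3 + acc)%Z else acc | _ => acc end) 0%Z E.

Definition allQ (al2 : Z3) (E : list (list Z)) (n0 n1 : Z) : bool :=
  forallb (fun l => match l with [v1; v2; v3] => orb (Z.eqb (Qi (xv al2 v1 v2 v3)) n0) (Z.eqb (Qi (xv al2 v1 v2 v3)) n1) | _ => false end) E.

Lemma RS_gr_E al2 be2 mu t E n0 n1 : allQ al2 E n0 n1 = true -> n0 <> n1 ->
  RS (gr al2 be2 mu t) E = IZR (cnt al2 be2 mu E n0) * exp (- (2 * PI * (t * (IZR n0 / 4)))) +
                           IZR (cnt al2 be2 mu E n1) * exp (- (2 * PI * (t * (IZR n1 / 4)))).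
Proof.
  intros H Hn. induction E as [|l E IH].
  - unfold RS, cnt; simpl. ring.
  - unfold allQ in H. simpl in H. apply andb_prop in H. destruct H as [H1 H2].
    rewrite RS_cons, IH by exact H2. unfold cnt. simpl fold_right. fold (cnt al2 be2 mu E n0). fold (cnt al2 be2 mu E n1).
    destruct l as [|v1 [|v2 [|v3 [|]]]]; try discriminate.
    apply Bool.orb_prop in H1. unfold gr.
    destruct H1 as [H1|H1]; apply Z.eqb_eq in H1.
    + rewrite H1. rewrite Z.eqb_refl. assert (Z.eqb n0 n1 = false) by (apply Z.eqb_neq; auto). rewrite H.
      rewrite plus_IZR. ring.
    + rewrite H1. rewrite Z.eqb_refl. assert (Z.eqb n1 n0 = false) by (apply Z.eqb_neq; auto). rewrite H.
      rewrite plus_IZR. ring.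
Qed.

Definition z0 : Z3 := (0, 0, 0)%Z.
Definition u101 : Z3 := (1, 0, 1)%Z.

Lemma small_hz0 : small (hz z0).
Proof. unfold small, hz, z0. replace (IZR 0 / 2) with 0 by (simpl; field). rewrite Rabs_R0. lra. Qed.
Lemma small_hz101 : small (hz u101).
Proof. unfold small, hz, u101. replace (IZR 0 / 2) with 0 by (simpl; field). rewrite Rabs_R0.
  rewrite Rabs_pos_eq; [|simpl; lra]. simpl. lra. Qed.

Lemma inst0 be2 mu (c1 : Z) : cnt z0 be2 mu E0 0 = 1%Z -> cnt z0 be2 mu E0 4 = c1 ->
  exists C, 0 <= C /\ forall t, 1 <= t ->
    Im (thetaR z0 be2 mu t) = 0 /\
    Rabs (Re (thetaR z0 be2 mu t) - (1 + IZR c1 * exp (- (2 * PI * t)))) <= C * (exp (- (2 * PI * t)) * exp (- (2 * PI * t))).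
Proof.
  intros H0 H1.
  destruct (asym z0 be2 mu E0 8) as [C [HC HCt]].
  - destruct mu as [[? ?] ?]; reflexivity.
  - apply small_hz0.
  - apply nodupb_ok; vm_compute; reflexivity.
  - apply inclb_ok; vm_compute; reflexivity.
  - intros v1 v2 v3 HQ. assert (HB : (-3 <= v1 <= 3)%Z /\ (-3 <= v2 <= 3)%Z /\ (-3 <= v3 <= 3)%Z) by (apply Qi_bound with (al2 := z0); cbn [fst snd z0]; lia).
    destruct HB as [B1 [B2 B3]].
    apply (checkE_ok z0 8 E0); [vm_compute; reflexivity|lia|lia|lia|exact HQ].
  - exists C. split; auto. intros t Ht. destruct (HCt t Ht) as [HI HR]. split; auto.
    rewrite (RS_gr_E z0 be2 mu t E0 0 4) in HR by (vm_compute; congruence).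
    rewrite H0, H1 in HR. 
    replace (IZR 1 * exp (- (2 * PI * (t * (IZR 0 / 4)))) + IZR c1 * exp (- (2 * PI * (t * (IZR 4 / 4)))))
      with (1 + IZR c1 * exp (- (2 * PI * t))) in HR.
    + rewrite <- exp_plus. replace (- (2 * PI * t) + - (2 * PI * t)) with (- (2 * PI * (t * (IZR 8 / 4)))) by (simpl; field). exact HR.
    + replace (- (2 * PI * (t * (IZR 0 / 4)))) with 0 by (simpl; field). rewrite exp_0.
      replace (- (2 * PI * (t * (IZR 4 / 4)))) with (- (2 * PI * t)) by (simpl; field). simpl. ring.
Qed.

Lemma instA be2 mu (m : Z) : cnt u101 be2 mu EA 2 = m ->
  exists C, 0 <= C /\ forall t, 1 <= t ->
    Im (thetaR u101 be2 mu t) = 0 /\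
    Rabs (Re (thetaR u101 be2 mu t) - IZR m * exp (- (PI * t))) <= C * (exp (- (PI * t)) * exp (- (PI * t)) * exp (- (PI * t))).
Proof.
  intros H0.
  destruct (asym u101 be2 mu EA 6) as [C [HC HCt]].
  - destruct mu as [[m1 m2] m3]. unfold Bi, u101. zlia.
  - apply small_hz101.
  - apply nodupb_ok; vm_compute; reflexivity.
  - apply inclb_ok; vm_compute; reflexivity.
  - intros v1 v2 v3 HQ. assert (HB : (-3 <= v1 <= 3)%Z /\ (-3 <= v2 <= 3)%Z /\ (-3 <= v3 <= 3)%Z) by (apply Qi_bound with (al2 := u101); cbn [fst snd u101]; lia).
    destruct HB as [B1 [B2 B3]].
    apply (checkE_ok u101 6 EA); [vm_compute; reflexivity|lia|lia|lia|exact HQ].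
  - exists C. split; auto. intros t Ht. destruct (HCt t Ht) as [HI HR]. split; auto.
    rewrite (RS_gr_E u101 be2 mu t EA 2 0) in HR by (vm_compute; congruence).
    assert (Hc0 : cnt u101 be2 mu EA 0 = 0%Z) by (vm_compute; reflexivity).
    rewrite H0, Hc0 in HR.
    replace (IZR m * exp (- (2 * PI * (t * (IZR 2 / 4)))) + IZR 0 * exp (- (2 * PI * (t * (IZR 0 / 4)))))
      with (IZR m * exp (- (PI * t))) in HR.
    + rewrite <- !exp_plus. replace (- (PI * t) + - (PI * t) + - (PI * t)) with (- (2 * PI * (t * (IZR 6 / 4)))) by (simpl; field). exact HR.
    + replace (- (2 * PI * (t * (IZR 2 / 4)))) with (- (PI * t)) by (simpl; field). simpl. ring.
Qed.

Lemma small_q eps : 0 < eps -> exists t, 1 <= t /\ exp (- (2 * PI * t)) < eps.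
Proof.
  intros He. pose proof PI_RGT_0.
  exists (1 + 1 / (2 * PI * eps)). split.
  - assert (0 < 1 / (2 * PI * eps)) by (apply Rdiv_lt_0_compat; nra). lra.
  - set (t := 1 + 1 / (2 * PI * eps)).
    assert (Ht : 0 < t) by (unfold t; assert (0 < 1 / (2 * PI * eps)) by (apply Rdiv_lt_0_compat; nra); lra).
    assert (1 + 2 * PI * t <= exp (2 * PI * t)).
    { left. apply exp_ineq1. nra. }
    rewrite exp_Ropp. assert (0 < exp (2 * PI * t)) by apply exp_pos.
    assert (2 * PI * t > 1 / eps).
    { unfold t. replace (2 * PI * (1 + 1 / (2 * PI * eps))) with (2 * PI + 1 / eps) by (field; lra). nra. }
    assert (1 / eps < exp (2 * PI * t)) by lra.
    apply Rmult_lt_reg_r with (exp (2 * PI * t)); auto.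
    rewrite Rinv_l by lra.
    apply Rmult_lt_reg_l with (/ eps). apply Rinv_0_lt_compat; auto.
    replace (/ eps * (eps * exp (2 * PI * t))) with (exp (2 * PI * t)) by (field; lra).
    replace (/ eps * 1) with (1 / eps) by (field; lra). lra.
Qed.

Lemma asym_coeffs A B K : 0 <= K ->
  (forall t, 1 <= t -> Rabs (A + B * exp (- (2 * PI * t))) <= K * (exp (- (2 * PI * t)) * exp (- (2 * PI * t)))) ->
  A = 0 /\ B = 0.
Proof.
  intros HK H.
  assert (Hq : forall t, 1 <= t -> 0 < exp (- (2 * PI * t)) <= 1).
  { intros t Ht. split; [apply exp_pos|]. rewrite <- exp_0. apply exp_le_compat. pose proof PI_RGT_0. nra. }
  assert (HA : A = 0).
  { destruct (Req_dec A 0) as [|HA]; auto. exfalso.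
    assert (0 < Rabs A) by (apply Rabs_pos_lt; auto).
    destruct (small_q (Rmin 1 (Rabs A / (Rabs B + K + 1)))) as [t [Ht Hqt]].
    { apply Rmin_pos; [lra|]. apply Rdiv_lt_0_compat; auto. pose proof (Rabs_pos B). lra. }
    specialize (H t Ht). specialize (Hq t Ht). set (q := exp (- (2 * PI * t))) in *.
    assert (q < Rabs A / (Rabs B + K + 1)) by (eapply Rlt_le_trans; [exact Hqt|apply Rmin_r]).
    assert (q * (Rabs B + K + 1) < Rabs A).
    { apply Rmult_lt_reg_r with (/ (Rabs B + K + 1)). apply Rinv_0_lt_compat. pose proof (Rabs_pos B). lra.
      replace (q * (Rabs B + K + 1) * / (Rabs B + K + 1)) with q by (field; pose proof (Rabs_pos B); lra). exact H1. }
    pose proof (Rabs_triang (A + B * q) (- (B * q))). replace (A + B * q + - (B * q)) with A in H3 by ring.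
    rewrite Rabs_Ropp, Rabs_mult, (Rabs_pos_eq q) in H3 by lra.
    pose proof (Rabs_pos B). assert (K * (q * q) <= K * q) by (apply Rmult_le_compat_l; nra). nra. }
  split; auto. subst A.
  destruct (Req_dec B 0) as [|HB]; auto. exfalso.
  assert (0 < Rabs B) by (apply Rabs_pos_lt; auto).
  destruct (small_q (Rmin 1 (Rabs B / (K + 1)))) as [t [Ht Hqt]].
  { apply Rmin_pos; [lra|]. apply Rdiv_lt_0_compat; auto. lra. }
  specialize (H t Ht). specialize (Hq t Ht). set (q := exp (- (2 * PI * t))) in *.
  assert (q < Rabs B / (K + 1)) by (eapply Rlt_le_trans; [exact Hqt|apply Rmin_r]).
  assert (q * (K + 1) < Rabs B).
  { apply Rmult_lt_reg_r with (/ (K + 1)). apply Rinv_0_lt_compat. lra.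
    replace (q * (K + 1) * / (K + 1)) with q by (field; lra). exact H1. }
  rewrite Rplus_0_l, Rabs_mult, (Rabs_pos_eq q) in H by lra.
  assert (Rabs B * q <= K * q * q) by lra.
  assert (Rabs B <= K * q) by (apply Rmult_le_reg_r with q; lra).
  nra.
Qed.

Lemma sq0 x c C q : 0 < q <= 1 -> 0 <= C -> Rabs (x - (1 + c * q)) <= C * (q * q) ->
  Rabs (x * x - (1 + 2 * c * q)) <= (c * c + 2 * C * (1 + Rabs c) + C * C) * (q * q).
Proof.
  intros Hq HC H. set (e := x - (1 + c * q)) in *.
  replace (x * x - (1 + 2 * c * q)) with (c * c * (q * q) + 2 * e + 2 * c * q * e + e * e) by (unfold e; ring).
  pose proof (Rabs_pos e). pose proof (Rabs_pos c).
  assert (Hqq : q * q <= 1) by nra.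
  eapply Rle_trans; [apply Rabs_triang|]. eapply Rle_trans; [apply Rplus_le_compat_r; apply Rabs_triang|].
  eapply Rle_trans; [apply Rplus_le_compat_r; apply Rplus_le_compat_r; apply Rabs_triang|].
  rewrite !Rabs_mult. rewrite (Rabs_pos_eq q), (Rabs_pos_eq 2) by lra.
  assert (Rabs c * Rabs c = c * c) by (rewrite <- Rabs_mult; apply Rabs_pos_eq; nra).
  assert (Rabs e * Rabs e <= C * (q * q) * (C * (q * q))) by (apply Rmult_le_compat; lra).
  assert (C * (q * q) * (C * (q * q)) <= C * C * (q * q)) by (assert (0 <= C * C * (q * q)) by nra; nra).
  assert (2 * Rabs c * q * Rabs e <= 2 * Rabs c * C * (q * q)).
  { assert (q * Rabs e <= C * (q * q)) by nra. nra. }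
  nra.
Qed.

Lemma sqA x m C h : 0 < h <= 1 -> 0 <= C -> Rabs (x - m * h) <= C * (h * h * h) ->
  Rabs (x * x - m * m * (h * h)) <= (2 * Rabs m * C + C * C) * ((h * h) * (h * h)).
Proof.
  intros Hh HC H. set (e := x - m * h) in *.
  replace (x * x - m * m * (h * h)) with (2 * m * h * e + e * e) by (unfold e; ring).
  pose proof (Rabs_pos e). pose proof (Rabs_pos m).
  eapply Rle_trans; [apply Rabs_triang|]. rewrite !Rabs_mult. rewrite (Rabs_pos_eq h), (Rabs_pos_eq 2) by lra.
  assert (Rabs e * Rabs e <= C * (h * h * h) * (C * (h * h * h))) by (apply Rmult_le_compat; lra).
  assert (h * h <= 1) by nra. assert (0 <= h * h * h * h) by nra.
  assert (C * (h * h * h) * (C * (h * h * h)) <= C * C * (h * h * h * h)) by nra.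
  assert (2 * Rabs m * h * Rabs e <= 2 * Rabs m * C * (h * h * h * h)).
  { assert (h * Rabs e <= C * (h * h * h * h)) by nra. nra. }
  nra.
Qed.

Lemma lin2 a d k r s : Rabs d <= k -> Rabs r <= s -> Rabs (r + a * d) <= s + Rabs a * k.
Proof.
  intros H1 H2. eapply Rle_trans; [apply Rabs_triang|]. rewrite Rabs_mult.
  apply Rplus_le_compat; auto. apply Rmult_le_compat_l; [apply Rabs_pos|auto].
Qed.

Definition b3 : Z3 := (0, 1, 0)%Z.
Definition b4 : Z3 := (1, 0, 0)%Z.
Definition b5 : Z3 := (1, 1, 0)%Z.

Lemma eqs_mu mu (c0 c3 c4 c5 m : Z) (a1 a2 a3 a4 a5 : R) :
  cnt z0 z0 mu E0 0 = 1%Z -> cnt z0 z0 mu E0 4 = c0 ->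
  cnt z0 b3 mu E0 0 = 1%Z -> cnt z0 b3 mu E0 4 = c3 ->
  cnt z0 b4 mu E0 0 = 1%Z -> cnt z0 b4 mu E0 4 = c4 ->
  cnt z0 b5 mu E0 0 = 1%Z -> cnt z0 b5 mu E0 4 = c5 ->
  cnt u101 z0 mu EA 2 = m ->
  (forall t, 1 <= t ->
     a1 * (Re (thetaR z0 z0 mu t) * Re (thetaR z0 z0 mu t)) +
     a2 * (Re (thetaR u101 z0 mu t) * Re (thetaR u101 z0 mu t)) +
     a3 * (Re (thetaR z0 b3 mu t) * Re (thetaR z0 b3 mu t)) +
     a4 * (Re (thetaR z0 b4 mu t) * Re (thetaR z0 b4 mu t)) +
     a5 * (Re (thetaR z0 b5 mu t) * Re (thetaR z0 b5 mu t)) = 0) ->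
  a1 + a3 + a4 + a5 = 0 /\ 2 * (a1 * IZR c0 + a3 * IZR c3 + a4 * IZR c4 + a5 * IZR c5) + a2 * (IZR m * IZR m) = 0.
Proof.
  intros H00 H04 H30 H34 H40 H44 H50 H54 HA Hf.
  destruct (inst0 z0 mu c0 H00 H04) as [C1 [HC1 T1]].
  destruct (inst0 b3 mu c3 H30 H34) as [C3 [HC3 T3]].
  destruct (inst0 b4 mu c4 H40 H44) as [C4 [HC4 T4]].
  destruct (inst0 b5 mu c5 H50 H54) as [C5 [HC5 T5]].
  destruct (instA z0 mu m HA) as [C2 [HC2 T2]].
  set (K1 := IZR c0 * IZR c0 + 2 * C1 * (1 + Rabs (IZR c0)) + C1 * C1).
  set (K3 := IZR c3 * IZR c3 + 2 * C3 * (1 + Rabs (IZR c3)) + C3 * C3).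
  set (K4 := IZR c4 * IZR c4 + 2 * C4 * (1 + Rabs (IZR c4)) + C4 * C4).
  set (K5 := IZR c5 * IZR c5 + 2 * C5 * (1 + Rabs (IZR c5)) + C5 * C5).
  set (K2 := 2 * Rabs (IZR m) * C2 + C2 * C2).
  apply (asym_coeffs _ _ (Rabs a1 * K1 + Rabs a2 * K2 + Rabs a3 * K3 + Rabs a4 * K4 + Rabs a5 * K5)).
  { assert (0 <= K1) by (unfold K1; pose proof (Rabs_pos (IZR c0)); nra).
    assert (0 <= K2) by (unfold K2; pose proof (Rabs_pos (IZR m)); nra).
    assert (0 <= K3) by (unfold K3; pose proof (Rabs_pos (IZR c3)); nra).
    assert (0 <= K4) by (unfold K4; pose proof (Rabs_pos (IZR c4)); nra).
    assert (0 <= K5) by (unfold K5; pose proof (Rabs_pos (IZR c5)); nra).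
    pose proof (Rabs_pos a1); pose proof (Rabs_pos a2); pose proof (Rabs_pos a3); pose proof (Rabs_pos a4); pose proof (Rabs_pos a5).
    assert (0 <= Rabs a1 * K1) by nra. assert (0 <= Rabs a2 * K2) by nra. assert (0 <= Rabs a3 * K3) by nra.
    assert (0 <= Rabs a4 * K4) by nra. assert (0 <= Rabs a5 * K5) by nra. lra. }
  intros t Ht.
  set (h := exp (- (PI * t))).
  set (q := exp (- (2 * PI * t))).
  assert (Eq : q = h * h) by (unfold q, h; rewrite <- exp_plus; f_equal; ring).
  assert (Hh : 0 < h <= 1).
  { split; [apply exp_pos|]. unfold h. rewrite <- exp_0. apply exp_le_compat. pose proof PI_RGT_0. nra. }
  assert (Hq : 0 < q <= 1) by (rewrite Eq; nra).
  destruct (T1 t Ht) as [_ R1]. destruct (T3 t Ht) as [_ R3]. destruct (T4 t Ht) as [_ R4].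
  destruct (T5 t Ht) as [_ R5]. destruct (T2 t Ht) as [_ R2].
  fold q in R1, R3, R4, R5. fold h in R2.
  pose proof (sq0 _ _ _ _ Hq HC1 R1) as S1. pose proof (sq0 _ _ _ _ Hq HC3 R3) as S3.
  pose proof (sq0 _ _ _ _ Hq HC4 R4) as S4. pose proof (sq0 _ _ _ _ Hq HC5 R5) as S5.
  pose proof (sqA _ _ _ _ Hh HC2 R2) as S2.
  fold K1 in S1. fold K3 in S3. fold K4 in S4. fold K5 in S5. fold K2 in S2.
  specialize (Hf t Ht).
  set (x1 := Re (thetaR z0 z0 mu t)) in *. set (x2 := Re (thetaR u101 z0 mu t)) in *.
  set (x3 := Re (thetaR z0 b3 mu t)) in *. set (x4 := Re (thetaR z0 b4 mu t)) in *.
  set (x5 := Re (thetaR z0 b5 mu t)) in *.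
  replace (a1 + a3 + a4 + a5 + (2 * (a1 * IZR c0 + a3 * IZR c3 + a4 * IZR c4 + a5 * IZR c5) + a2 * (IZR m * IZR m)) * q)
    with (0 + (- a1) * (x1 * x1 - (1 + 2 * IZR c0 * q)) + (- a2) * (x2 * x2 - IZR m * IZR m * (h * h))
            + (- a3) * (x3 * x3 - (1 + 2 * IZR c3 * q)) + (- a4) * (x4 * x4 - (1 + 2 * IZR c4 * q))
            + (- a5) * (x5 * x5 - (1 + 2 * IZR c5 * q))).
  2:{ rewrite <- Eq. lra. }
  rewrite <- (Rabs_Ropp a1), <- (Rabs_Ropp a2), <- (Rabs_Ropp a3), <- (Rabs_Ropp a4), <- (Rabs_Ropp a5).
  replace ((Rabs (- a1) * K1 + Rabs (- a2) * K2 + Rabs (- a3) * K3 + Rabs (- a4) * K4 + Rabs (- a5) * K5) * (q * q))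
    with (0 + Rabs (- a1) * (K1 * (q * q)) + Rabs (- a2) * (K2 * (q * q)) + Rabs (- a3) * (K3 * (q * q))
          + Rabs (- a4) * (K4 * (q * q)) + Rabs (- a5) * (K5 * (q * q))) by ring.
  repeat apply lin2; auto; try (rewrite Rabs_R0; lra); try (right; apply Rabs_R0).
  replace (K2 * (q * q)) with (K2 * ((h * h) * (h * h))) by (rewrite Eq; ring). exact S2.
Qed.

Lemma Im_thetaR al2 be2 mu t : ((Bi al2 mu) mod 2 = 0)%Z -> small (hz al2) -> 1 <= t -> Im (thetaR al2 be2 mu t) = 0.
Proof.
  intros Hev Hs Ht.
  assert (Hy : 0 < Im ((0, t) : C)) by (simpl; lra).
  destruct (theta_lim (hz al2) (hz be2) (0, t) (rv (hz mu)) Hy Hs) as [L1 L2].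
  assert (ES : forall N, theta_partial (rv (hz al2)) (rv (hz be2)) (0, t) (rv (hz mu)) N = RtoC (RS (gr al2 be2 mu t) (cube 3 N))).
  { intros N. rewrite theta_partial_CS, <- RS_CS. apply CS_ext. intros. apply tf_gr; auto. }
  unfold thetaR. assert (Rabs (Im (theta (rv (hz al2)) (rv (hz be2)) (0, t) (rv (hz mu))) - 0) <= 0).
  { apply (lim_bound _ _ _ _ 0 L2). intros N _. rewrite ES. simpl. rewrite Rminus_0_r, Rabs_R0. lra. }
  pose proof (Rabs_pos (Im (theta (rv (hz al2)) (rv (hz be2)) (0, t) (rv (hz mu))) - 0)).
  assert (Rabs (Im (theta (rv (hz al2)) (rv (hz be2)) (0, t) (rv (hz mu))) - 0) = 0) by lra.
  apply Rabs_eq_0 in H1. lra.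
Qed.

Lemma rv_z0 : rv (hz z0) = zero3.
Proof. unfold hz, z0, rv, zero3. replace (IZR 0 / 2) with 0 by (simpl; field). reflexivity. Qed.
Lemma rv_u101 : rv (hz u101) = (half, RtoC 0, half).
Proof. unfold hz, u101, rv, half. replace (IZR 0 / 2) with 0 by (simpl; field). reflexivity. Qed.
Lemma rv_b3 : rv (hz b3) = (RtoC 0, half, RtoC 0).
Proof. unfold hz, b3, rv, half. replace (IZR 0 / 2) with 0 by (simpl; field). reflexivity. Qed.
Lemma rv_b4 : rv (hz b4) = (half, RtoC 0, RtoC 0).
Proof. unfold hz, b4, rv, half. replace (IZR 0 / 2) with 0 by (simpl; field). reflexivity. Qed.
Lemma rv_b5 : rv (hz b5) = (half, half, RtoC 0).
Proof. unfold hz, b5, rv, half. replace (IZR 0 / 2) with 0 by (simpl; field). reflexivity. Qed.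

Lemma csq_real c (th : C) : Im th = 0 -> Cmult c (sq th) = (Re c * (Re th * Re th), Im c * (Re th * Re th)).
Proof.
  intros H. destruct c as [c1 c2]. destruct th as [x y]. simpl in H. subst y.
  unfold sq, Cmult, Re, Im. simpl. f_equal; ring.
Qed.

Lemma Bi_even_z0 mu : ((Bi z0 mu) mod 2 = 0)%Z.
Proof. destruct mu as [[? ?] ?]. reflexivity. Qed.
Lemma Bi_even_u101 mu : ((Bi u101 mu) mod 2 = 0)%Z.
Proof. destruct mu as [[m1 m2] m3]. unfold Bi, u101. zlia. Qed.

Lemma real_eqs (c1 c2 c3 c4 c5 : C) mu :
  (forall (tau : C) (z : C3), (0 < Im tau)%R ->
        Cplus (Cmult c1 (sq (theta zero3 zero3 tau z)))
        (Cplus (Cmult c2 (sq (theta (half, RtoC 0, half) zero3 tau z)))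
        (Cplus (Cmult c3 (sq (theta zero3 (RtoC 0, half, RtoC 0) tau z)))
        (Cplus (Cmult c4 (sq (theta zero3 (half, RtoC 0, RtoC 0) tau z)))
               (Cmult c5 (sq (theta zero3 (half, half, RtoC 0) tau z)))))) = RtoC 0) ->
  forall t, 1 <= t ->
   (Re c1 * (Re (thetaR z0 z0 mu t) * Re (thetaR z0 z0 mu t)) +
     Re c2 * (Re (thetaR u101 z0 mu t) * Re (thetaR u101 z0 mu t)) +
     Re c3 * (Re (thetaR z0 b3 mu t) * Re (thetaR z0 b3 mu t)) +
     Re c4 * (Re (thetaR z0 b4 mu t) * Re (thetaR z0 b4 mu t)) +
     Re c5 * (Re (thetaR z0 b5 mu t) * Re (thetaR z0 b5 mu t)) = 0) /\
   (Im c1 * (Re (thetaR z0 z0 mu t) * Re (thetaR z0 z0 mu t)) +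
     Im c2 * (Re (thetaR u101 z0 mu t) * Re (thetaR u101 z0 mu t)) +
     Im c3 * (Re (thetaR z0 b3 mu t) * Re (thetaR z0 b3 mu t)) +
     Im c4 * (Re (thetaR z0 b4 mu t) * Re (thetaR z0 b4 mu t)) +
     Im c5 * (Re (thetaR z0 b5 mu t) * Re (thetaR z0 b5 mu t)) = 0).
Proof.
  intros H t Ht.
  specialize (H (0, t) (rv (hz mu)) ltac:(simpl; lra)).
  rewrite <- rv_z0, <- rv_u101, <- rv_b3, <- rv_b4, <- rv_b5 in H.
  fold (thetaR z0 z0 mu t) (thetaR u101 z0 mu t) (thetaR z0 b3 mu t) (thetaR z0 b4 mu t) (thetaR z0 b5 mu t) in H.
  pose proof (Im_thetaR z0 z0 mu t (Bi_even_z0 mu) small_hz0 Ht) as I1.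
  pose proof (Im_thetaR u101 z0 mu t (Bi_even_u101 mu) small_hz101 Ht) as I2.
  pose proof (Im_thetaR z0 b3 mu t (Bi_even_z0 mu) small_hz0 Ht) as I3.
  pose proof (Im_thetaR z0 b4 mu t (Bi_even_z0 mu) small_hz0 Ht) as I4.
  pose proof (Im_thetaR z0 b5 mu t (Bi_even_z0 mu) small_hz0 Ht) as I5.
  rewrite (csq_real c1 _ I1), (csq_real c2 _ I2), (csq_real c3 _ I3), (csq_real c4 _ I4), (csq_real c5 _ I5) in H.
  pose proof (f_equal fst H) as HR. pose proof (f_equal snd H) as HI.
  cbn [fst snd Cplus RtoC] in HR, HI. split; lra.
Qed.

Lemma solve5 a1 a2 a3 a4 a5 :
  a1 + a3 + a4 + a5 = 0 ->
  2 * (a1 * IZR 12 + a3 * IZR (-4) + a4 * IZR (-4) + a5 * IZR (-4)) + a2 * (IZR 6 * IZR 6) = 0 ->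
  2 * (a1 * IZR (-4) + a3 * IZR 12 + a4 * IZR (-4) + a5 * IZR (-4)) + a2 * (IZR (-2) * IZR (-2)) = 0 ->
  2 * (a1 * IZR (-4) + a3 * IZR (-4) + a4 * IZR 12 + a5 * IZR (-4)) + a2 * (IZR (-2) * IZR (-2)) = 0 ->
  2 * (a1 * IZR (-4) + a3 * IZR (-4) + a4 * IZR (-4) + a5 * IZR 12) + a2 * (IZR (-2) * IZR (-2)) = 0 ->
  a1 = 0 /\ a2 = 0 /\ a3 = 0 /\ a4 = 0 /\ a5 = 0.
Proof. intros. repeat split; lra. Qed.

Lemma all_real (a1 a2 a3 a4 a5 : R) :
  (forall mu, In mu [z0; b3; b4; b5] -> forall t, 1 <= t ->
     a1 * (Re (thetaR z0 z0 mu t) * Re (thetaR z0 z0 mu t)) +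
     a2 * (Re (thetaR u101 z0 mu t) * Re (thetaR u101 z0 mu t)) +
     a3 * (Re (thetaR z0 b3 mu t) * Re (thetaR z0 b3 mu t)) +
     a4 * (Re (thetaR z0 b4 mu t) * Re (thetaR z0 b4 mu t)) +
     a5 * (Re (thetaR z0 b5 mu t) * Re (thetaR z0 b5 mu t)) = 0) ->
  a1 = 0 /\ a2 = 0 /\ a3 = 0 /\ a4 = 0 /\ a5 = 0.
Proof.
  intros H.
  destruct (eqs_mu z0 12 (-4) (-4) (-4) 6 a1 a2 a3 a4 a5 ltac:(vm_compute; reflexivity) ltac:(vm_compute; reflexivity) ltac:(vm_compute; reflexivity) ltac:(vm_compute; reflexivity) ltac:(vm_compute; reflexivity) ltac:(vm_compute; reflexivity) ltac:(vm_compute; reflexivity) ltac:(vm_compute; reflexivity) ltac:(vm_compute; reflexivity) (H z0 ltac:(simpl; auto))) as [A1 B1].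
  destruct (eqs_mu b3 (-4) 12 (-4) (-4) (-2) a1 a2 a3 a4 a5 ltac:(vm_compute; reflexivity) ltac:(vm_compute; reflexivity) ltac:(vm_compute; reflexivity) ltac:(vm_compute; reflexivity) ltac:(vm_compute; reflexivity) ltac:(vm_compute; reflexivity) ltac:(vm_compute; reflexivity) ltac:(vm_compute; reflexivity) ltac:(vm_compute; reflexivity) (H b3 ltac:(simpl; auto))) as [A2 B2].
  destruct (eqs_mu b4 (-4) (-4) 12 (-4) (-2) a1 a2 a3 a4 a5 ltac:(vm_compute; reflexivity) ltac:(vm_compute; reflexivity) ltac:(vm_compute; reflexivity) ltac:(vm_compute; reflexivity) ltac:(vm_compute; reflexivity) ltac:(vm_compute; reflexivity) ltac:(vm_compute; reflexivity) ltac:(vm_compute; reflexivity) ltac:(vm_compute; reflexivity) (H b4 ltac:(simpl; auto))) as [A3 B3].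
  destruct (eqs_mu b5 (-4) (-4) (-4) 12 (-2) a1 a2 a3 a4 a5 ltac:(vm_compute; reflexivity) ltac:(vm_compute; reflexivity) ltac:(vm_compute; reflexivity) ltac:(vm_compute; reflexivity) ltac:(vm_compute; reflexivity) ltac:(vm_compute; reflexivity) ltac:(vm_compute; reflexivity) ltac:(vm_compute; reflexivity) ltac:(vm_compute; reflexivity) (H b5 ltac:(simpl; auto))) as [A4 B4].
  apply solve5; auto.
Qed.

Lemma part1 : forall c1 c2 c3 c4 c5 : C,
     (forall (tau : C) (z : C3), (0 < Im tau)%R ->
        Cplus (Cmult c1 (sq (theta zero3 zero3 tau z)))
        (Cplus (Cmult c2 (sq (theta (half, RtoC 0, half) zero3 tau z)))
        (Cplus (Cmult c3 (sq (theta zero3 (RtoC 0, half, RtoC 0) tau z)))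
        (Cplus (Cmult c4 (sq (theta zero3 (half, RtoC 0, RtoC 0) tau z)))
               (Cmult c5 (sq (theta zero3 (half, half, RtoC 0) tau z)))))) = RtoC 0) ->
     c1 = RtoC 0 /\ c2 = RtoC 0 /\ c3 = RtoC 0 /\ c4 = RtoC 0 /\ c5 = RtoC 0.
Proof.
  intros c1 c2 c3 c4 c5 H.
  destruct (all_real (Re c1) (Re c2) (Re c3) (Re c4) (Re c5)) as [R1 [R2 [R3 [R4 R5]]]].
  { intros mu _ t Ht. apply (real_eqs c1 c2 c3 c4 c5 mu H t Ht). }
  destruct (all_real (Im c1) (Im c2) (Im c3) (Im c4) (Im c5)) as [I1 [I2 [I3 [I4 I5]]]].
  { intros mu _ t Ht. apply (real_eqs c1 c2 c3 c4 c5 mu H t Ht). }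
  destruct c1 as [x1 y1], c2 as [x2 y2], c3 as [x3 y3], c4 as [x4 y4], c5 as [x5 y5].
  simpl in *. subst. unfold RtoC. repeat split; reflexivity.
Qed.

Theorem theorem7p13 :
  (* linear independence of theta_{alpha,0}^2 (alpha in A), theta_{0,beta}^2 (beta in B)
     as functions on H x C^3 *)
  (forall c1 c2 c3 c4 c5 : C,
     (forall (tau : C) (z : C3), (0 < Im tau)%R ->
        Cplus (Cmult c1 (sq (theta zero3 zero3 tau z)))
        (Cplus (Cmult c2 (sq (theta (half, RtoC 0, half) zero3 tau z)))
        (Cplus (Cmult c3 (sq (theta zero3 (RtoC 0, half, RtoC 0) tau z)))
        (Cplus (Cmult c4 (sq (theta zero3 (half, RtoC 0, RtoC 0) tau z)))
               (Cmult c5 (sq (theta zero3 (half, half, RtoC 0) tau z)))))) = RtoC 0) ->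
     c1 = RtoC 0 /\ c2 = RtoC 0 /\ c3 = RtoC 0 /\ c4 = RtoC 0 /\ c5 = RtoC 0)
  /\
  (forall al be : C3, In al setA -> In be setB ->
     forall (tau : C) (z : C3), (0 < Im tau)%R ->
       Cplus (sq (theta al be tau z)) (sq (theta zero3 zero3 tau z)) =
       Cplus (sq (theta al zero3 tau z)) (sq (theta zero3 be tau z))).
Proof.
  split; [exact part1 | exact part2].
Qed.
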